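(* In iTML, suppose $T :: \sigma,\nu,M \Rightarrow \nu',S$ and $(\mu,R), (\mu',R') \sqsubseteq (\nu',S)$. Then $\mathsf{bwd}_T(\mu \sqcup \mu', R \sqcup R') = \mathsf{bwd}_T(\mu,R) \sqcup \mathsf{bwd}_T(\mu',R')$, where $\mathsf{bwd}_T : \mathrm{Prefix}(\nu',S) \to \mathrm{Prefix}(\sigma,\nu,M,T)$ sends $(\mu_1,R_1)$ to the unique $(\rho,\mu_0,N,U)$ with $\mu_1,R_1,T \searrow \rho,\mu_0,N,U$.
   Context: Partial syntax of iTML ($\Box$ a hole). Expressions $e ::= x \mid () \mid \mathsf{inl}\,e \mid \mathsf{inr}\,e \mid (e_1,e_2) \mid \mathsf{fst}\,e \mid \mathsf{snd}\,e \mid \mathsf{fun}\,f(x).M \mid \Box$. Computations $M ::= \mathsf{return}\,e \mid \mathsf{let}\,x = M_1\,\mathsf{in}\,M_2 \mid e_1\,e_2 \mid \mathsf{case}\,e\,\mathsf{of}\,\{\mathsf{inl}\,x \to M_1; \mathsf{inr}\,y \to M_2\} \mid \mathsf{raise}\,e \mid \mathsf{try}\,M_1\,\mathsf{with}\,x \to M_2 \mid \mathsf{ref}\,e \mid e_1 := e_2 \mid !e \mid \Box$. Values $v ::= () \mid \mathsf{inl}\,v \mid \mathsf{inr}\,v \mid (v_1,v_2) \mid \langle\rho,\mathsf{fun}\,f(x).M\rangle \mid \ell \mid \Box$. Environments $\rho$ / stores $\mu$: finitely supported maps from variables / locations to values, regarded as total with value $\Box$ off their domain; $\rho[x\mapsto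 v]$ extends, $\mu[\ell\mapsto v]$ updates; $\Box$ also denotes the everywhere-$\Box$ environment, $\Box[x\mapsto v]$ the environment that is $\Box$ except at $x$, and $[\ell\mapsto v]$ the store that is $\Box$ except at $\ell$. Outcomes $k ::= \mathsf{val}\mid\mathsf{exn}$; results $R ::= k\,v$. Traces $T ::= \mathsf{return}\,e \mid \mathsf{let_F}(T) \mid \mathsf{let_S}(T_1,x.T_2) \mid \mathsf{app}(e_1,e_2,f.x.T) \mid \mathsf{caseL}(e,x.T,y) \mid \mathsf{caseR}(e,x,y.T) \mid \mathsf{raise}\,e \mid \mathsf{try_S}(T) \mid \mathsf{try_F}(T_1,x.T_2) \mid \mathsf{ref}_\ell\,e \mid e_1:=_\ell e_2 \mid !_\ell\,e \mid \Box^k_{\mathcal{L}}$ ($\mathcal{L}$ a finite set of locations). $\mathsf{writes}(T)$: $\mathcal{L}$ for $\Box^k_{\mathcal{L}}$; $\emptyset$ for $\mathsf{return}\,e,\mathsf{raise}\,e,!_\ell e$; $\{\ell\}$ for $\mathsf{ref}_\ell e$, $e_1:=_\ell e_2$; union of both subtraces for $\mathsf{let_S}$, $\mathsf{try_F}$; that of the unique subtrace for $\mathsf{let_F},\mathsf{try_S},\mathsf{app},\mathsf{caseL},\mathsf{caseR}$. $\mathsf{outcome}(T)$: $k$ for $\Box^k_{\mathcal{L}}$; $\mathsf{val}$ for $\mathsf{return},\mathsf{try_S},\mathsf{ref}_\ell,:=_\ell,!_\ell$; $\mathsf{exn}$ for $\mathsf{let_F},\mathsf{raise}$; outcome of $T_2$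 for $\mathsf{let_S}(T_1,x.T_2),\mathsf{try_F}(T_1,x.T_2)$; outcome of the subtrace for $\mathsf{app},\mathsf{caseL},\mathsf{caseR}$. Order $\sqsubseteq$: on expressions, computations, values the least order with $\Box\sqsubseteq t$ closed under constructors componentwise; $k\,v\sqsubseteq k\,v'$ iff $v\sqsubseteq v'$ (same $k$); pointwise on environments and stores; on traces the least order containing $\Box^k_{\mathcal{L}}\sqsubseteq T$ whenever $\mathsf{writes}(T)=\mathcal{L}$ and $\mathsf{outcome}(T)=k$, closed under trace constructors componentwise; componentwise on tuples. $\mathrm{Prefix}(t)=\{t'\mid t'\sqsubseteq t\}$, a lattice with join $\sqcup$. Store erasure: $\mu\triangleleft\mathcal{L}$ is $\mu$ with every $\ell\in\mathcal{L}$ mapped to $\Box$. Evaluation (hole-free): $\rho,x\Rightarrow\rho(x)$; $()\Rightarrow()$; $\mathsf{fun}\,f(x).M\Rightarrow\langle\rho,\mathsf{fun}\,f(x).M\rangle$; $\mathsf{inl},\mathsf{inr}$, pairs componentwise; $\mathsf{fst},\mathsf{snd}$ project. $\mathsf{return}\,e::\rho,\mu,\mathsf{return}\,e\Rightarrow\mu,\mathsf{val}\,v$ if $\rho,e\Rightarrow v$; $\mathsf{app}(e_1,e_2,f.x.T)::\rho,\mu,e_1\,e_2\Rightarrow\mu',R$ if $\rho,e_1\Rightarrow v_1=\langle\rho',\mathsf{fun}\,f(x).M\rangle$, $\rho,e_2\Rightarrow v_2$, $T::\rho'[f\mapsto v_1][x\mapsto v_2],\mu,M\Rightarrow\mu',R$;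 $\mathsf{raise}\,e::\rho,\mu,\mathsf{raise}\,e\Rightarrow\mu,\mathsf{exn}\,v$ if $\rho,e\Rightarrow v$; $\mathsf{ref}_\ell\,e::\rho,\mu,\mathsf{ref}\,e\Rightarrow\mu[\ell\mapsto v],\mathsf{val}\,\ell$ if $\rho,e\Rightarrow v$, $\ell\notin\mathrm{dom}\,\mu$; $e_1:=_\ell e_2::\rho,\mu,e_1:=e_2\Rightarrow\mu[\ell\mapsto v],\mathsf{val}\,()$ if $\rho,e_1\Rightarrow\ell$, $\rho,e_2\Rightarrow v$; $!_\ell e::\rho,\mu,!e\Rightarrow\mu,\mathsf{val}\,\mu(\ell)$ if $\rho,e\Rightarrow\ell\in\mathrm{dom}\,\mu$; $\mathsf{let_S}(T_1,x.T_2)::\rho,\mu,\mathsf{let}\,x=M_1\,\mathsf{in}\,M_2\Rightarrow\mu'',R$ if $T_1::\rho,\mu,M_1\Rightarrow\mu',\mathsf{val}\,v$ and $T_2::\rho[x\mapsto v],\mu',M_2\Rightarrow\mu'',R$; $\mathsf{let_F}(T)::\ldots\Rightarrow\mu',\mathsf{exn}\,v$ if $T::\rho,\mu,M_1\Rightarrow\mu',\mathsf{exn}\,v$; $\mathsf{try_F}(T_1,x.T_2)::\rho,\mu,\mathsf{try}\,M_1\,\mathsf{with}\,x\to M_2\Rightarrow\mu'',R$ if $T_1::\rho,\mu,M_1\Rightarrow\mu',\mathsf{exn}\,v$, $T_2::\rho[x\mapsto v],\mu',M_2\Rightarrow\mu'',R$; $\mathsf{try_S}(T_1)::\ldots\Rightarrow\mu',\mathsf{val}\,v$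 if $T_1::\rho,\mu,M_1\Rightarrow\mu',\mathsf{val}\,v$; $\mathsf{caseL}(e,x.T,y)::\rho,\mu,\mathsf{case}\,e\,\mathsf{of}\{\mathsf{inl}\,x\to M_1;\mathsf{inr}\,y\to M_2\}\Rightarrow\mu',R$ if $\rho,e\Rightarrow\mathsf{inl}\,v$, $T::\rho[x\mapsto v],\mu,M_1\Rightarrow\mu',R$; symmetrically $\mathsf{caseR}(e,x,y.T)$. Expression backward slicing $v,e\searrow\rho,e'$ (first rule used whenever it applies): $\Box,e\searrow\Box,\Box$; for $v\neq\Box$, $v,x\searrow\Box[x\mapsto v],x$; $\langle\rho,\mathsf{fun}\,f(x).M\rangle,\mathsf{fun}\,f(x).M'\searrow\rho,\mathsf{fun}\,f(x).M$; $(),()\searrow\Box,()$; $\mathsf{inl}\,v,\mathsf{inl}\,e\searrow\rho,\mathsf{inl}\,e'$ and $\mathsf{inr}\,v,\mathsf{inr}\,e\searrow\rho,\mathsf{inr}\,e'$ if $v,e\searrow\rho,e'$; $(v_1,v_2),(e_1,e_2)\searrow\rho_1\sqcup\rho_2,(e_1',e_2')$ if $v_i,e_i\searrow\rho_i,e_i'$; $v,\mathsf{fst}\,e\searrow\rho,\mathsf{fst}\,e'$ if $(v,\Box),e\searrow\rho,e'$; $v,\mathsf{snd}\,e\searrow\rho,\mathsf{snd}\,e'$ if $(\Box,v),e\searrow\rho,e'$. Computation backward slicing $\mu,R,T\searrow\rho,\mu',M,U$ (B-Slice$\Box$ is applied whenever it applies): (B-Slice$\Box$) if $\mu\triangleleft\mathsf{writes}(T)=\mu$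 then $\mu,k\,\Box,T\searrow\Box,\mu,\Box,\Box^k_{\mathsf{writes}(T)}$. (B-Ret) $v,e\searrow\rho,e'$ ⟹ $\mu,\mathsf{val}\,v,\mathsf{return}\,e\searrow\rho,\mu,\mathsf{return}\,e',\mathsf{return}\,e'$. (B-Let) $\mu,R,T_2\searrow\rho_2[x\mapsto v],\mu',M_2,U_2$, $\mu',\mathsf{val}\,v,T_1\searrow\rho_1,\mu'',M_1,U_1$ ⟹ $\mu,R,\mathsf{let_S}(T_1,x.T_2)\searrow\rho_1\sqcup\rho_2,\mu'',\mathsf{let}\,x=M_1\,\mathsf{in}\,M_2,\mathsf{let_S}(U_1,x.U_2)$. (B-LetFail) $\mu,\mathsf{exn}\,v,T_1\searrow\rho,\mu',M_1,U_1$ ⟹ $\mu,\mathsf{exn}\,v,\mathsf{let_F}(T_1)\searrow\rho,\mu',\mathsf{let}\,x=M_1\,\mathsf{in}\,\Box,\mathsf{let_F}(U_1)$. (B-CaseL) $\mu,R,T\searrow\rho[x\mapsto v],\mu',M_1,U$, $\mathsf{inl}\,v,e\searrow\rho',e'$ ⟹ $\mu,R,\mathsf{caseL}(e,x.T,y)\searrow\rho\sqcup\rho',\mu',\mathsf{case}\,e'\,\mathsf{of}\{\mathsf{inl}\,x\to M_1;\mathsf{inr}\,y\to\Box\},\mathsf{caseL}(e',x.U,y)$. (B-CaseR) $\mu,R,T\searrow\rho[y\mapsto v],\mu',M_2,U$, $\mathsf{inr}\,v,e\searrow\rho',e'$ ⟹ $\mu,R,\mathsf{caseR}(e,x,y.T)\searrow\rho\sqcup\rho',\mu',\mathsf{case}\,e'\,\mathsf{of}\{\mathsf{inl}\,x\to\Box;\mathsf{inr}\,y\to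 M_2\},\mathsf{caseR}(e',x,y.U)$. (B-App) $\mu,R,T\searrow\rho[f\mapsto v_1][x\mapsto v_2],\mu',M,U$, $v_2,e_2\searrow\rho_2,e_2'$, $v_1\sqcup\langle\rho,\mathsf{fun}\,f(x).M\rangle,e_1\searrow\rho_1,e_1'$ ⟹ $\mu,R,\mathsf{app}(e_1,e_2,f.x.T)\searrow\rho_1\sqcup\rho_2,\mu',e_1'\,e_2',\mathsf{app}(e_1',e_2',f.x.U)$. (B-Raise) $v,e\searrow\rho,e'$ ⟹ $\mu,\mathsf{exn}\,v,\mathsf{raise}\,e\searrow\rho,\mu,\mathsf{raise}\,e',\mathsf{raise}\,e'$. (B-TryFail) $\mu,R,T_2\searrow\rho_1[x\mapsto v],\mu',M_2,U_2$, $\mu',\mathsf{exn}\,v,T_1\searrow\rho_2,\mu'',M_1,U_1$ ⟹ $\mu,R,\mathsf{try_F}(T_1,x.T_2)\searrow\rho_1\sqcup\rho_2,\mu'',\mathsf{try}\,M_1\,\mathsf{with}\,x\to M_2,\mathsf{try_F}(U_1,x.U_2)$. (B-Try) $\mu,\mathsf{val}\,v,T_1\searrow\rho,\mu',M_1,U_1$ ⟹ $\mu,\mathsf{val}\,v,\mathsf{try_S}(T_1)\searrow\rho,\mu',\mathsf{try}\,M_1\,\mathsf{with}\,x\to\Box,\mathsf{try_S}(U_1)$. (B-Ref) $\mu(\ell),e\searrow\rho,e'$ ⟹ $\mu,\mathsf{val}\,v,\mathsf{ref}_\ell\,e\searrow\rho,\mu[\ell\mapsto\Box],\mathsf{ref}\,e',\mathsf{ref}_\ell\,e'$.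 (B-Assign) $\mu(\ell),e_2\searrow\rho_2,e_2'$, $\ell,e_1\searrow\rho_1,e_1'$ ⟹ $\mu,\mathsf{val}\,v,e_1:=_\ell e_2\searrow\rho_1\sqcup\rho_2,\mu[\ell\mapsto\Box],e_1':=e_2',e_1':=_\ell e_2'$. (B-Deref) $\ell,e\searrow\rho,e'$ ⟹ $\mu,\mathsf{val}\,v,!_\ell e\searrow\rho,\mu\sqcup[\ell\mapsto v],!e',!_\ell e'$. For $T::\sigma,\nu,M\Rightarrow\nu',S$, backward slicing along $T$ is a total deterministic function from $\mathrm{Prefix}(\nu',S)$ into $\mathrm{Prefix}(\sigma,\nu,M,T)$, so $\mathsf{bwd}_T$ is well defined. *)

(* Defs.v *)
From mathcomp Require Import all_boot finmap.

Set Implicit Arguments.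
Unset Strict Implicit.
Unset Printing Implicit Defensive.

Local Open Scope fset_scope.

Definition var := nat.
Definition loc := nat.

Inductive iexpr : Type :=
| EVar  : var -> iexpr
| EUnit : iexpr
| EInl  : iexpr -> iexpr
| EInr  : iexpr -> iexpr
| EPair : iexpr -> iexpr -> iexpr
| EFst  : iexpr -> iexpr
| ESnd  : iexpr -> iexpr
| EFun  : var -> var -> icomp -> iexpr          (* fun f(x).M *)
| EHole : iexpr
with icomp : Type :=
| CRet    : iexpr -> icomp
| CLet    : var -> icomp -> icomp -> icomp
| CApp    : iexpr -> iexpr -> icomp
| CCase   : iexpr -> var -> icomp -> var -> icomp -> icomp
| CRaise  : iexpr -> icomp
| CTry    : icomp -> var -> icomp -> icomp
| CRef    : iexpr -> icomp
| CAssign : iexpr -> iexpr -> icomp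
| CDeref  : iexpr -> icomp
| CHole   : icomp.

(* Values; an environment is a map var -> value, total with value VHole
   off its domain. *)
Inductive ivalue : Type :=
| VUnit : ivalue
| VInl  : ivalue -> ivalue
| VInr  : ivalue -> ivalue
| VPair : ivalue -> ivalue -> ivalue
| VClo  : (var -> ivalue) -> var -> var -> icomp -> ivalue
| VLoc  : loc -> ivalue
| VHole : ivalue.

Definition env := var -> ivalue.
Definition store := loc -> ivalue.

Inductive outcome : Type := Val | Exn.

Inductive result : Type := Res : outcome -> ivalue -> result.

Inductive itrace : Type :=
| TRet    : iexpr -> itrace
| TLetF   : itrace -> itrace
| TLetS   : itrace -> var -> itrace -> itrace
| TApp    : iexpr -> iexpr -> var -> var -> itrace -> itrace
| TCaseL  : iexpr -> var -> itrace -> var -> itrace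
| TCaseR  : iexpr -> var -> var -> itrace -> itrace
| TRaise  : iexpr -> itrace
| TTryS   : itrace -> itrace
| TTryF   : itrace -> var -> itrace -> itrace
| TRef    : loc -> iexpr -> itrace
| TAssign : loc -> iexpr -> iexpr -> itrace
| TDeref  : loc -> iexpr -> itrace
| THole   : outcome -> {fset loc} -> itrace.

Definition env_hole : env := fun _ => VHole.
Definition store_hole : store := fun _ => VHole.

Definition upd (r : var -> ivalue) (x : nat) (v : ivalue) : var -> ivalue :=
  fun y => if y == x then v else r y.

Definition in_dom (m : store) (l : loc) : Prop := m l <> VHole.

Definition erase (m : store) (L : {fset loc}) : store :=
  fun l => if l \in L then VHole else m l.

Fixpoint writes (T : itrace) : {fset loc} :=
  match T with
  | THole _ L => L
  | TRet _ | TRaise _ | TDeref _ _ => fset0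
  | TRef l _ | TAssign l _ _ => [fset l]
  | TLetS T1 _ T2 | TTryF T1 _ T2 => writes T1 `|` writes T2
  | TLetF T | TTryS T | TApp _ _ _ _ T | TCaseL _ _ T _ | TCaseR _ _ _ T => writes T
  end.

Fixpoint toutcome (T : itrace) : outcome :=
  match T with
  | THole k _ => k
  | TRet _ | TTryS _ | TRef _ _ | TAssign _ _ _ | TDeref _ _ => Val
  | TLetF _ | TRaise _ => Exn
  | TLetS _ _ T2 | TTryF _ _ T2 => toutcome T2
  | TApp _ _ _ _ T | TCaseL _ _ T _ | TCaseR _ _ _ T => toutcome T
  end.

Inductive ele : iexpr -> iexpr -> Prop :=
| ele_hole e : ele EHole e
| ele_var x : ele (EVar x) (EVar x)
| ele_unit : ele EUnit EUnit
| ele_inl e e' : ele e e' -> ele (EInl e) (EInl e')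
| ele_inr e e' : ele e e' -> ele (EInr e) (EInr e')
| ele_pair e1 e2 e1' e2' : ele e1 e1' -> ele e2 e2' -> ele (EPair e1 e2) (EPair e1' e2')
| ele_fst e e' : ele e e' -> ele (EFst e) (EFst e')
| ele_snd e e' : ele e e' -> ele (ESnd e) (ESnd e')
| ele_fun f x M M' : cle M M' -> ele (EFun f x M) (EFun f x M')
with cle : icomp -> icomp -> Prop :=
| cle_hole M : cle CHole M
| cle_ret e e' : ele e e' -> cle (CRet e) (CRet e')
| cle_let x M1 M2 M1' M2' : cle M1 M1' -> cle M2 M2' -> cle (CLet x M1 M2) (CLet x M1' M2')
| cle_app e1 e2 e1' e2' : ele e1 e1' -> ele e2 e2' -> cle (CApp e1 e2) (CApp e1' e2')
| cle_case e x M1 y M2 e' M1' M2' : ele e e' -> cle M1 M1' -> cle M2 M2' ->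
    cle (CCase e x M1 y M2) (CCase e' x M1' y M2')
| cle_raise e e' : ele e e' -> cle (CRaise e) (CRaise e')
| cle_try M1 x M2 M1' M2' : cle M1 M1' -> cle M2 M2' -> cle (CTry M1 x M2) (CTry M1' x M2')
| cle_ref e e' : ele e e' -> cle (CRef e) (CRef e')
| cle_assign e1 e2 e1' e2' : ele e1 e1' -> ele e2 e2' -> cle (CAssign e1 e2) (CAssign e1' e2')
| cle_deref e e' : ele e e' -> cle (CDeref e) (CDeref e').

Inductive vle : ivalue -> ivalue -> Prop :=
| vle_hole v : vle VHole v
| vle_unit : vle VUnit VUnit
| vle_inl v v' : vle v v' -> vle (VInl v) (VInl v')
| vle_inr v v' : vle v v' -> vle (VInr v) (VInr v')
| vle_pair v1 v2 v1' v2' : vle v1 v1' -> vle v2 v2' -> vle (VPair v1 v2) (VPair v1' v2')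
| vle_clo r r' f x M M' : (forall y, vle (r y) (r' y)) -> cle M M' ->
    vle (VClo r f x M) (VClo r' f x M')
| vle_loc l : vle (VLoc l) (VLoc l).

Definition envle (r r' : env) : Prop := forall y, vle (r y) (r' y).
Definition stle (m m' : store) : Prop := forall l, vle (m l) (m' l).

Definition rle (R R' : result) : Prop :=
  match R, R' with Res k v, Res k' v' => k = k' /\ vle v v' end.

Inductive tle : itrace -> itrace -> Prop :=
| tle_hole T : tle (THole (toutcome T) (writes T)) T
| tle_ret e e' : ele e e' -> tle (TRet e) (TRet e')
| tle_letF T T' : tle T T' -> tle (TLetF T) (TLetF T')
| tle_letS T1 x T2 T1' T2' : tle T1 T1' -> tle T2 T2' -> tle (TLetS T1 x T2) (TLetS T1' x T2')
| tle_app e1 e2 f x T e1' e2' T' : ele e1 e1' -> ele e2 e2' -> tle T T' ->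
    tle (TApp e1 e2 f x T) (TApp e1' e2' f x T')
| tle_caseL e x T y e' T' : ele e e' -> tle T T' -> tle (TCaseL e x T y) (TCaseL e' x T' y)
| tle_caseR e x y T e' T' : ele e e' -> tle T T' -> tle (TCaseR e x y T) (TCaseR e' x y T')
| tle_raise e e' : ele e e' -> tle (TRaise e) (TRaise e')
| tle_tryS T T' : tle T T' -> tle (TTryS T) (TTryS T')
| tle_tryF T1 x T2 T1' T2' : tle T1 T1' -> tle T2 T2' -> tle (TTryF T1 x T2) (TTryF T1' x T2')
| tle_ref l e e' : ele e e' -> tle (TRef l e) (TRef l e')
| tle_assign l e1 e2 e1' e2' : ele e1 e1' -> ele e2 e2' ->
    tle (TAssign l e1 e2) (TAssign l e1' e2')
| tle_deref l e e' : ele e e' -> tle (TDeref l e) (TDeref l e').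

(* ---------------- Joins (meaningful on compatible arguments) ---------------- *)

Fixpoint ejoin (e1 e2 : iexpr) {struct e1} : iexpr :=
  match e1, e2 with
  | EHole, _ => e2
  | _, EHole => e1
  | EInl a, EInl b => EInl (ejoin a b)
  | EInr a, EInr b => EInr (ejoin a b)
  | EPair a1 a2, EPair b1 b2 => EPair (ejoin a1 b1) (ejoin a2 b2)
  | EFst a, EFst b => EFst (ejoin a b)
  | ESnd a, ESnd b => ESnd (ejoin a b)
  | EFun f x M, EFun _ _ M' => EFun f x (cjoin M M')
  | _, _ => e1
  end
with cjoin (M1 M2 : icomp) {struct M1} : icomp :=
  match M1, M2 with
  | CHole, _ => M2
  | _, CHole => M1
  | CRet a, CRet b => CRet (ejoin a b)
  | CLet x A1 A2, CLet _ B1 B2 => CLet x (cjoin A1 B1) (cjoin A2 B2)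
  | CApp a1 a2, CApp b1 b2 => CApp (ejoin a1 b1) (ejoin a2 b2)
  | CCase a x A1 y A2, CCase b _ B1 _ B2 => CCase (ejoin a b) x (cjoin A1 B1) y (cjoin A2 B2)
  | CRaise a, CRaise b => CRaise (ejoin a b)
  | CTry A1 x A2, CTry B1 _ B2 => CTry (cjoin A1 B1) x (cjoin A2 B2)
  | CRef a, CRef b => CRef (ejoin a b)
  | CAssign a1 a2, CAssign b1 b2 => CAssign (ejoin a1 b1) (ejoin a2 b2)
  | CDeref a, CDeref b => CDeref (ejoin a b)
  | _, _ => M1
  end.

Fixpoint vjoin (v1 v2 : ivalue) {struct v1} : ivalue :=
  match v1, v2 with
  | VHole, _ => v2
  | _, VHole => v1
  | VInl a, VInl b => VInl (vjoin a b)
  | VInr a, VInr b => VInr (vjoin a b)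
  | VPair a1 a2, VPair b1 b2 => VPair (vjoin a1 b1) (vjoin a2 b2)
  | VClo r f x M, VClo r' _ _ M' => VClo (fun y => vjoin (r y) (r' y)) f x (cjoin M M')
  | _, _ => v1
  end.

Definition envjoin (r1 r2 : env) : env := fun y => vjoin (r1 y) (r2 y).
Definition stjoin (m1 m2 : store) : store := fun l => vjoin (m1 l) (m2 l).

Definition rjoin (R1 R2 : result) : result :=
  match R1, R2 with Res k v1, Res _ v2 => Res k (vjoin v1 v2) end.

Fixpoint tjoin (T1 T2 : itrace) {struct T1} : itrace :=
  match T1, T2 with
  | THole _ _, _ => T2
  | _, THole _ _ => T1
  | TRet a, TRet b => TRet (ejoin a b)
  | TLetF A, TLetF B => TLetF (tjoin A B)
  | TLetS A1 x A2, TLetS B1 _ B2 => TLetS (tjoin A1 B1) x (tjoin A2 B2)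
  | TApp a1 a2 f x A, TApp b1 b2 _ _ B => TApp (ejoin a1 b1) (ejoin a2 b2) f x (tjoin A B)
  | TCaseL a x A y, TCaseL b _ B _ => TCaseL (ejoin a b) x (tjoin A B) y
  | TCaseR a x y A, TCaseR b _ _ B => TCaseR (ejoin a b) x y (tjoin A B)
  | TRaise a, TRaise b => TRaise (ejoin a b)
  | TTryS A, TTryS B => TTryS (tjoin A B)
  | TTryF A1 x A2, TTryF B1 _ B2 => TTryF (tjoin A1 B1) x (tjoin A2 B2)
  | TRef l a, TRef _ b => TRef l (ejoin a b)
  | TAssign l a1 a2, TAssign _ b1 b2 => TAssign l (ejoin a1 b1) (ejoin a2 b2)
  | TDeref l a, TDeref _ b => TDeref l (ejoin a b)
  | _, _ => T1
  end.

Inductive eeval : env -> iexpr -> ivalue -> Prop :=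
| ev_var r x : eeval r (EVar x) (r x)
| ev_unit r : eeval r EUnit VUnit
| ev_fun r f x M : eeval r (EFun f x M) (VClo r f x M)
| ev_inl r e v : eeval r e v -> eeval r (EInl e) (VInl v)
| ev_inr r e v : eeval r e v -> eeval r (EInr e) (VInr v)
| ev_pair r e1 e2 v1 v2 : eeval r e1 v1 -> eeval r e2 v2 -> eeval r (EPair e1 e2) (VPair v1 v2)
| ev_fst r e v1 v2 : eeval r e (VPair v1 v2) -> eeval r (EFst e) v1
| ev_snd r e v1 v2 : eeval r e (VPair v1 v2) -> eeval r (ESnd e) v2.

Inductive ceval : itrace -> env -> store -> icomp -> store -> result -> Prop :=
| cv_ret r m e v : eeval r e v -> ceval (TRet e) r m (CRet e) m (Res Val v)
| cv_app r m e1 e2 r' f x M v2 T m' R :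
    eeval r e1 (VClo r' f x M) -> eeval r e2 v2 ->
    ceval T (upd (upd r' f (VClo r' f x M)) x v2) m M m' R ->
    ceval (TApp e1 e2 f x T) r m (CApp e1 e2) m' R
| cv_raise r m e v : eeval r e v -> ceval (TRaise e) r m (CRaise e) m (Res Exn v)
| cv_ref r m e v l : eeval r e v -> ~ in_dom m l ->
    ceval (TRef l e) r m (CRef e) (upd m l v) (Res Val (VLoc l))
| cv_assign r m e1 e2 l v : eeval r e1 (VLoc l) -> eeval r e2 v ->
    ceval (TAssign l e1 e2) r m (CAssign e1 e2) (upd m l v) (Res Val VUnit)
| cv_deref r m e l : eeval r e (VLoc l) -> in_dom m l ->
    ceval (TDeref l e) r m (CDeref e) m (Res Val (m l))
| cv_letS r m x M1 M2 T1 T2 m' v m'' R :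
    ceval T1 r m M1 m' (Res Val v) -> ceval T2 (upd r x v) m' M2 m'' R ->
    ceval (TLetS T1 x T2) r m (CLet x M1 M2) m'' R
| cv_letF r m x M1 M2 T m' v :
    ceval T r m M1 m' (Res Exn v) ->
    ceval (TLetF T) r m (CLet x M1 M2) m' (Res Exn v)
| cv_tryF r m M1 x M2 T1 T2 m' v m'' R :
    ceval T1 r m M1 m' (Res Exn v) -> ceval T2 (upd r x v) m' M2 m'' R ->
    ceval (TTryF T1 x T2) r m (CTry M1 x M2) m'' R
| cv_tryS r m M1 x M2 T1 m' v :
    ceval T1 r m M1 m' (Res Val v) ->
    ceval (TTryS T1) r m (CTry M1 x M2) m' (Res Val v)
| cv_caseL r m e x M1 y M2 v T m' R :
    eeval r e (VInl v) -> ceval T (upd r x v) m M1 m' R ->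
    ceval (TCaseL e x T y) r m (CCase e x M1 y M2) m' R
| cv_caseR r m e x M1 y M2 v T m' R :
    eeval r e (VInr v) -> ceval T (upd r y v) m M2 m' R ->
    ceval (TCaseR e x y T) r m (CCase e x M1 y M2) m' R.

(* v, e \searrow rho, e'  (first applicable rule) *)
Inductive eslice : ivalue -> iexpr -> env -> iexpr -> Prop :=
| es_hole e : eslice VHole e env_hole EHole
| es_var v x : v <> VHole -> eslice v (EVar x) (upd env_hole x v) (EVar x)
| es_fun r f x M M' : eslice (VClo r f x M) (EFun f x M') r (EFun f x M)
| es_unit : eslice VUnit EUnit env_hole EUnit
| es_inl v e r e' : eslice v e r e' -> eslice (VInl v) (EInl e) r (EInl e')
| es_inr v e r e' : eslice v e r e' -> eslice (VInr v) (EInr e) r (EInr e')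
| es_pair v1 v2 e1 e2 r1 r2 e1' e2' :
    eslice v1 e1 r1 e1' -> eslice v2 e2 r2 e2' ->
    eslice (VPair v1 v2) (EPair e1 e2) (envjoin r1 r2) (EPair e1' e2')
| es_fst v e r e' : v <> VHole -> eslice (VPair v VHole) e r e' -> eslice v (EFst e) r (EFst e')
| es_snd v e r e' : v <> VHole -> eslice (VPair VHole v) e r e' -> eslice v (ESnd e) r (ESnd e').

Definition bhole_applies (m : store) (R : result) (T : itrace) : Prop :=
  (exists k, R = Res k VHole) /\ erase m (writes T) = m.

(* B-Slice-box takes priority: every other
   rule carries the side condition ~ bhole_applies.  A premise output
   environment rho' written rho[x |-> v] in the paper is decomposed as
   v := rho' x and rho := rho'[x |-> box]. *)
Inductive cslice : store -> result -> itrace -> env -> store -> icomp -> itrace -> Prop :=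
| cs_hole m k T : erase m (writes T) = m ->
    cslice m (Res k VHole) T env_hole m CHole (THole k (writes T))
| cs_ret m v e r e' : ~ bhole_applies m (Res Val v) (TRet e) ->
    eslice v e r e' ->
    cslice m (Res Val v) (TRet e) r m (CRet e') (TRet e')
| cs_let m R T1 x T2 r' m' M2 U2 r1 m'' M1 U1 :
    ~ bhole_applies m R (TLetS T1 x T2) ->
    cslice m R T2 r' m' M2 U2 ->
    cslice m' (Res Val (r' x)) T1 r1 m'' M1 U1 ->
    cslice m R (TLetS T1 x T2) (envjoin r1 (upd r' x VHole)) m''
           (CLet x M1 M2) (TLetS U1 x U2)
| cs_letfail m v T1 r m' M1 U1 x :
    ~ bhole_applies m (Res Exn v) (TLetF T1) ->
    cslice m (Res Exn v) T1 r m' M1 U1 ->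
    cslice m (Res Exn v) (TLetF T1) r m' (CLet x M1 CHole) (TLetF U1)
| cs_caseL m R e x T y r' m' M1 U r2 e' :
    ~ bhole_applies m R (TCaseL e x T y) ->
    cslice m R T r' m' M1 U ->
    eslice (VInl (r' x)) e r2 e' ->
    cslice m R (TCaseL e x T y) (envjoin (upd r' x VHole) r2) m'
           (CCase e' x M1 y CHole) (TCaseL e' x U y)
| cs_caseR m R e x y T r' m' M2 U r2 e' :
    ~ bhole_applies m R (TCaseR e x y T) ->
    cslice m R T r' m' M2 U ->
    eslice (VInr (r' y)) e r2 e' ->
    cslice m R (TCaseR e x y T) (envjoin (upd r' y VHole) r2) m'
           (CCase e' x CHole y M2) (TCaseR e' x y U)
| cs_app m R e1 e2 f x T r' m' M U r2 e2' r1 e1' :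
    ~ bhole_applies m R (TApp e1 e2 f x T) ->
    cslice m R T r' m' M U ->
    eslice (r' x) e2 r2 e2' ->
    eslice (vjoin (upd r' x VHole f)
                  (VClo (upd (upd r' x VHole) f VHole) f x M)) e1 r1 e1' ->
    cslice m R (TApp e1 e2 f x T) (envjoin r1 r2) m'
           (CApp e1' e2') (TApp e1' e2' f x U)
| cs_raise m v e r e' :
    ~ bhole_applies m (Res Exn v) (TRaise e) ->
    eslice v e r e' ->
    cslice m (Res Exn v) (TRaise e) r m (CRaise e') (TRaise e')
| cs_tryfail m R T1 x T2 r' m' M2 U2 r2 m'' M1 U1 :
    ~ bhole_applies m R (TTryF T1 x T2) ->
    cslice m R T2 r' m' M2 U2 ->
    cslice m' (Res Exn (r' x)) T1 r2 m'' M1 U1 ->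
    cslice m R (TTryF T1 x T2) (envjoin (upd r' x VHole) r2) m''
           (CTry M1 x M2) (TTryF U1 x U2)
| cs_try m v T1 r m' M1 U1 x :
    ~ bhole_applies m (Res Val v) (TTryS T1) ->
    cslice m (Res Val v) T1 r m' M1 U1 ->
    cslice m (Res Val v) (TTryS T1) r m' (CTry M1 x CHole) (TTryS U1)
| cs_ref m v l e r e' :
    ~ bhole_applies m (Res Val v) (TRef l e) ->
    eslice (m l) e r e' ->
    cslice m (Res Val v) (TRef l e) r (upd m l VHole) (CRef e') (TRef l e')
| cs_assign m v l e1 e2 r2 e2' r1 e1' :
    ~ bhole_applies m (Res Val v) (TAssign l e1 e2) ->
    eslice (m l) e2 r2 e2' ->
    eslice (VLoc l) e1 r1 e1' ->
    cslice m (Res Val v) (TAssign l e1 e2) (envjoin r1 r2) (upd m l VHole)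
           (CAssign e1' e2') (TAssign l e1' e2')
| cs_deref m v l e r e' :
    ~ bhole_applies m (Res Val v) (TDeref l e) ->
    eslice (VLoc l) e r e' ->
    cslice m (Res Val v) (TDeref l e) r (stjoin m (upd store_hole l v))
           (CDeref e') (TDeref l e').

Definition in_prefix_in (sigma : env) (nu : store) (M : icomp) (T : itrace)
    (b : env * store * icomp * itrace) : Prop :=
  let: (r, m, N, U) := b in envle r sigma /\ stle m nu /\ cle N M /\ tle U T.

Definition in_prefix_out (nu' : store) (S : result) (a : store * result) : Prop :=
  stle a.1 nu' /\ rle a.2 S.

Definition bwd (sigma : env) (nu : store) (M : icomp) (T : itrace)
    (a : store * result) (b : env * store * icomp * itrace) : Prop :=
  in_prefix_in sigma nu M T b /\
  let: (r, m, N, U) := b in cslice a.1 a.2 T r m N U.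

Definition join_out (a a' : store * result) : store * result :=
  (stjoin a.1 a'.1, rjoin a.2 a'.2).

Definition join_in (b b' : env * store * icomp * itrace) : env * store * icomp * itrace :=
  let: (r, m, N, U) := b in let: (r', m', N', U') := b' in
  (envjoin r r', stjoin m m', cjoin N N', tjoin U U').

(* Main.v *)
Require Import Defs.
From mathcomp Require Import all_boot finmap.
From Stdlib Require Import FunctionalExtensionality Classical.
Set Bullet Behavior "Strict Subproofs".

Unset Implicit Arguments.

Scheme ele_mut := Induction for ele Sort Prop
with cle_mut := Induction for cle Sort Prop.
Scheme iexpr_mut := Induction for iexpr Sort Prop
with icomp_mut := Induction for icomp Sort Prop.

Lemma elecle_refl :
  (forall e, ele e e) /\ (forall M, cle M M).
Proof.
  split; [apply (iexpr_mut (fun e => ele e e) (fun M => cle M M))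
         |apply (icomp_mut (fun e => ele e e) (fun M => cle M M))];
  intros; constructor; auto.
Qed.
Definition ele_refl := proj1 elecle_refl.
Definition cle_refl := proj2 elecle_refl.

Lemma elecle_trans :
  (forall a b, ele a b -> forall c, ele b c -> ele a c) /\
  (forall a b, cle a b -> forall c, cle b c -> cle a c).
Proof.
  split; [apply (ele_mut (fun a b _ => forall c, ele b c -> ele a c) (fun a b _ => forall c, cle b c -> cle a c))
         |apply (cle_mut (fun a b _ => forall c, ele b c -> ele a c) (fun a b _ => forall c, cle b c -> cle a c))];
  intros; try (constructor; fail);
  match goal with
  | H : ele _ ?c |- ele _ ?c => inversion H; subst; constructor; auto
  | H : cle _ ?c |- cle _ ?c => inversion H; subst; constructor; auto end.
Qed.
Definition ele_trans := proj1 elecle_trans.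
Definition cle_trans := proj2 elecle_trans.

Lemma elecle_antisym :
  (forall a b, ele a b -> ele b a -> a = b) /\
  (forall a b, cle a b -> cle b a -> a = b).
Proof.
  split; [apply (ele_mut (fun a b _ => ele b a -> a = b) (fun a b _ => cle b a -> a = b))
         |apply (cle_mut (fun a b _ => ele b a -> a = b) (fun a b _ => cle b a -> a = b))];
  intros; 
  match goal with H : _ _ _ |- _ => inversion H; subst; f_equal; auto end.
Qed.
Definition ele_antisym := proj1 elecle_antisym.
Definition cle_antisym := proj2 elecle_antisym.

Lemma ejoin_ub_l :
  (forall a c, ele a c -> forall b, ele b c -> ele a (ejoin a b)) /\
  (forall a c, cle a c -> forall b, cle b c -> cle a (cjoin a b)).
Proof.
  split; [apply (ele_mut (fun a c _ => forall b, ele b c -> ele a (ejoin a b)) (fun a c _ => forall b, cle b c -> cle a (cjoin a b)))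
         |apply (cle_mut (fun a c _ => forall b, ele b c -> ele a (ejoin a b)) (fun a c _ => forall b, cle b c -> cle a (cjoin a b)))];
  intros; try (constructor; fail);
  match goal with H : _ _ _ |- _ => inversion H; subst; simpl; constructor; auto using ele_refl, cle_refl end.
Qed.

Lemma ejoin_ub_r :
  (forall a c, ele a c -> forall b, ele b c -> ele b (ejoin a b)) /\
  (forall a c, cle a c -> forall b, cle b c -> cle b (cjoin a b)).
Proof.
  split; [apply (ele_mut (fun a c _ => forall b, ele b c -> ele b (ejoin a b)) (fun a c _ => forall b, cle b c -> cle b (cjoin a b)))
         |apply (cle_mut (fun a c _ => forall b, ele b c -> ele b (ejoin a b)) (fun a c _ => forall b, cle b c -> cle b (cjoin a b)))];
  intros; try (simpl; apply ele_refl || apply cle_refl);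
  match goal with H : _ _ _ |- _ => inversion H; subst; simpl; constructor; auto using ele_refl, cle_refl end.
Qed.

Lemma ejoin_lub :
  (forall a c, ele a c -> forall b, ele b c -> ele (ejoin a b) c) /\
  (forall a c, cle a c -> forall b, cle b c -> cle (cjoin a b) c).
Proof.
  split; [apply (ele_mut (fun a c _ => forall b, ele b c -> ele (ejoin a b) c) (fun a c _ => forall b, cle b c -> cle (cjoin a b) c))
         |apply (cle_mut (fun a c _ => forall b, ele b c -> ele (ejoin a b) c) (fun a c _ => forall b, cle b c -> cle (cjoin a b) c))];
  intros; try (simpl; assumption);
  match goal with H : _ _ _ |- _ => inversion H; subst; simpl; constructor; auto end.
Qed.

Unset Implicit Arguments.

Lemma vle_refl v : vle v v.
Proof. induction v; constructor; auto using cle_refl. Qed.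

Lemma vle_trans a b c : vle a b -> vle b c -> vle a c.
Proof.
  intros H; revert c; induction H; intros c Hc; try constructor;
  inversion Hc; subst; constructor; eauto using cle_trans.
Qed.

Lemma vle_antisym a b : vle a b -> vle b a -> a = b.
Proof.
  intros H; induction H; intros Hb; inversion Hb; subst; f_equal; auto.
  - apply functional_extensionality; auto.
  - apply cle_antisym; auto.
Qed.

Lemma vjoin_ub_l a c : vle a c -> forall b, vle b c -> vle a (vjoin a b).
Proof.
  intros H; induction H; intros b Hb; try constructor;
  inversion Hb; subst; simpl; constructor; auto using vle_refl, cle_refl.
  all: try (intros y; apply vle_refl).
  all: try (apply (proj2 ejoin_ub_l) with M'; auto).
Qed.

Lemma vjoin_ub_r a c : vle a c -> forall b, vle b c -> vle b (vjoin a b).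
Proof.
  intros H; induction H; intros b Hb; try (simpl; apply vle_refl);
  inversion Hb; subst; simpl; constructor; auto using vle_refl, cle_refl.
  all: try (apply (proj2 ejoin_ub_r) with M'; auto).
Qed.

Lemma vjoin_lub a c : vle a c -> forall b, vle b c -> vle (vjoin a b) c.
Proof.
  intros H; induction H; intros b Hb; try (simpl; assumption);
  inversion Hb; subst; simpl; constructor; auto.
  all: try (apply (proj2 ejoin_lub); auto).
Qed.

Lemma vjoin_comm a b c : vle a c -> vle b c -> vjoin a b = vjoin b a.
Proof.
  intros; apply vle_antisym; apply vjoin_lub; eauto using vjoin_ub_l, vjoin_ub_r.
Qed.


Lemma vjoin_le_inv a b c z : vle a c -> vle b c -> vle (vjoin a b) z -> vle a z /\ vle b z.
Proof.
  intros Ha Hb Hz; split; (eapply vle_trans; [|exact Hz]).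
  eapply vjoin_ub_l; eauto. eapply vjoin_ub_r; eauto.
Qed.

Ltac ubc := repeat apply vjoin_lub; assumption.

Ltac decomp c H :=
  match type of H with
  | vle (vjoin ?a ?b) ?z =>
      let H1 := fresh "H" in let H2 := fresh "H" in
      destruct (vjoin_le_inv a b c z ltac:(ubc) ltac:(ubc) H) as [H1 H2];
      clear H; decomp c H1; decomp c H2
  | _ => idtac
  end.

Ltac vjoin_eq c :=
  apply vle_antisym;
  [ match goal with |- vle _ ?y => let Hy := fresh in pose proof (vle_refl y) as Hy; decomp c Hy end
  | match goal with |- vle _ ?y => let Hy := fresh in pose proof (vle_refl y) as Hy; decomp c Hy end];
  repeat apply vjoin_lub; assumption.

Lemma vjoin_assoc a b d c : vle a c -> vle b c -> vle d c ->
  vjoin (vjoin a b) d = vjoin a (vjoin b d).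
Proof. intros; vjoin_eq c. Qed.

Lemma vjoin_inter a b d e c : vle a c -> vle b c -> vle d c -> vle e c ->
  vjoin (vjoin a b) (vjoin d e) = vjoin (vjoin a d) (vjoin b e).
Proof. intros; vjoin_eq c. Qed.

Lemma vjoin_h_r a : vjoin a VHole = a.
Proof. destruct a; reflexivity. Qed.

Lemma vjoin_eqH a b : vjoin a b = VHole -> a = VHole /\ b = VHole.
Proof. destruct a, b; simpl; try discriminate; auto. Qed.

Lemma vjoin_idem a : vjoin a a = a.
Proof. apply vle_antisym. apply vjoin_lub; apply vle_refl. apply (vjoin_ub_l a a); apply vle_refl. Qed.

Unset Implicit Arguments.

Lemma envjoin_comm a b c : envle a c -> envle b c -> envjoin a b = envjoin b a.
Proof. intros; apply functional_extensionality; intro y; eapply vjoin_comm; eauto. Qed.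
Lemma envjoin_assoc a b d c : envle a c -> envle b c -> envle d c ->
  envjoin (envjoin a b) d = envjoin a (envjoin b d).
Proof. intros; apply functional_extensionality; intro y; eapply vjoin_assoc; eauto. Qed.
Lemma envjoin_inter a b d e c : envle a c -> envle b c -> envle d c -> envle e c ->
  envjoin (envjoin a b) (envjoin d e) = envjoin (envjoin a d) (envjoin b e).
Proof. intros; apply functional_extensionality; intro y; eapply vjoin_inter; eauto. Qed.
Lemma envjoin_h_r a : envjoin a env_hole = a.
Proof. apply functional_extensionality; intro y; apply vjoin_h_r. Qed.
Lemma envjoin_lub a b c : envle a c -> envle b c -> envle (envjoin a b) c.
Proof. intros Ha Hb y; apply vjoin_lub; auto. Qed.
Lemma envle_hole c : envle env_hole c.
Proof. intros y; constructor. Qed.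

Lemma stjoin_comm a b c : stle a c -> stle b c -> stjoin a b = stjoin b a.
Proof. exact (@envjoin_comm a b c). Qed.
Lemma stjoin_assoc a b d c : stle a c -> stle b c -> stle d c ->
  stjoin (stjoin a b) d = stjoin a (stjoin b d).
Proof. exact (@envjoin_assoc a b d c). Qed.
Lemma stjoin_inter a b d e c : stle a c -> stle b c -> stle d c -> stle e c ->
  stjoin (stjoin a b) (stjoin d e) = stjoin (stjoin a d) (stjoin b e).
Proof. exact (@envjoin_inter a b d e c). Qed.
Lemma stjoin_lub a b c : stle a c -> stle b c -> stle (stjoin a b) c.
Proof. exact (@envjoin_lub a b c). Qed.

Lemma upd_join (r r' : nat -> ivalue) x a b :
  upd (fun y => vjoin (r y) (r' y)) x (vjoin a b) = (fun y => vjoin (upd r x a y) (upd r' x b y)).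
Proof. apply functional_extensionality; intro y; unfold upd; case: (y == x); reflexivity. Qed.

Lemma upd_hole_join (r r' : nat -> ivalue) x :
  upd (fun y => vjoin (r y) (r' y)) x VHole = (fun y => vjoin (upd r x VHole y) (upd r' x VHole y)).
Proof. exact (upd_join r r' x VHole VHole). Qed.

Lemma envle_upd_hole (r s : nat -> ivalue) x v :
  (forall y, vle (r y) (upd s x v y)) -> forall y, vle (upd r x VHole y) (s y).
Proof. intros H y; unfold upd; move: (H y); unfold upd; case: (y == x); auto; constructor. Qed.

Lemma envle_upd_at (r s : nat -> ivalue) x v :
  (forall y, vle (r y) (upd s x v y)) -> vle (r x) v.
Proof. intros H; move: (H x); unfold upd; rewrite eqxx; auto. Qed.

Lemma envle_upd (r s : nat -> ivalue) x v :
  (forall y, vle (r y) (s y)) -> vle v (s x) -> forall y, vle (upd r x v y) (s y).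
Proof. intros H Hv y; unfold upd; case: eqP => [->|]; auto. Qed.

Lemma eslice_sound w e r e' : eslice w e r e' ->
  forall s v, eeval s e v -> vle w v -> envle r s /\ ele e' e.
Proof.
  induction 1; intros s vv Hev Hle.
  - split; [apply envle_hole | constructor].
  - inversion Hev; subst. split; [|constructor].
    intro y; apply envle_upd; [apply envle_hole|auto].
  - inversion Hev; subst. inversion Hle; subst. split; auto. constructor; auto.
  - split; [apply envle_hole|constructor].
  - inversion Hev; subst. inversion Hle; subst. edestruct IHeslice; [eassumption|eassumption|]; split; auto; constructor; auto.
  - inversion Hev; subst. inversion Hle; subst. edestruct IHeslice; [eassumption|eassumption|]; split; auto; constructor; auto.
  - inversion Hev; subst. inversion Hle; subst.
    edestruct IHeslice1; [eassumption|eassumption|]; edestruct IHeslice2; [eassumption|eassumption|].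
    split; [apply envjoin_lub; auto|constructor; auto].
  - inversion Hev; subst. edestruct IHeslice; [eassumption|constructor; [eassumption|constructor]|]. split; auto; constructor; auto.
  - inversion Hev; subst. edestruct IHeslice; [eassumption|constructor; [constructor|eassumption]|]. split; auto; constructor; auto.
Qed.

Lemma eslice_sound_env w e r e' s v : eslice w e r e' -> eeval s e v -> vle w v -> envle r s.
Proof. intros H1 H2 H3; exact (proj1 (eslice_sound _ _ _ _ H1 _ _ H2 H3)). Qed.
Lemma eslice_sound_e w e r e' s v : eslice w e r e' -> eeval s e v -> vle w v -> ele e' e.
Proof. intros H1 H2 H3; exact (proj2 (eslice_sound _ _ _ _ H1 _ _ H2 H3)). Qed.

Lemma eslice_det w e ra ea : eslice w e ra ea -> forall rb eb, eslice w e rb eb -> ra = rb /\ ea = eb.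
Proof.
  induction 1; intros rb eb HB; inversion HB; subst; try congruence; auto.
  all: repeat match goal with
    | IH : forall rb eb, eslice ?w ?e rb eb -> _, H : eslice ?w ?e _ _ |- _ =>
        destruct (IH _ _ H); clear IH; subst end; auto.
Qed.

Lemma ejoin_h_r e : ejoin e EHole = e.
Proof. destruct e; reflexivity. Qed.
Lemma cjoin_h_r e : cjoin e CHole = e.
Proof. destruct e; reflexivity. Qed.

Lemma eslice_join w e ra ea : eslice w e ra ea ->
  forall s v w' rb eb rc ec, eeval s e v -> vle w v -> vle w' v ->
  eslice w' e rb eb -> eslice (vjoin w w') e rc ec ->
  rc = envjoin ra rb /\ ec = ejoin ea eb.
Proof.
  intros H1; induction H1; intros s vv w' rb eb rc ec Hev Hw Hw' H2 H3.
  - simpl in H3. destruct (eslice_det _ _ _ _ H2 _ _ H3); subst; split; reflexivity.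
  - inversion H2; subst.
    + rewrite vjoin_h_r in H3. destruct (eslice_det _ _ _ _ (es_var x H) _ _ H3); subst.
      rewrite envjoin_h_r ejoin_h_r; auto.
    + remember (vjoin v w') as u. inversion H3; subst.
      * destruct (vjoin_eqH _ _ (esym H0)); contradiction.
      * split; [|reflexivity]. exact (upd_join env_hole env_hole x v w').
  - inversion H2; subst.
    + rewrite vjoin_h_r in H3. destruct (eslice_det _ _ _ _ (es_fun r f x M M') _ _ H3); subst.
      rewrite envjoin_h_r ejoin_h_r; auto.
    + simpl in H3. inversion H3; subst. split; reflexivity.
  - inversion H2; subst.
    + simpl in H3. destruct (eslice_det _ _ _ _ es_unit _ _ H3); subst. rewrite envjoin_h_r; auto.
    + simpl in H3. inversion H3; subst. split; reflexivity.
  - inversion H2; subst.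
    + rewrite vjoin_h_r in H3. destruct (eslice_det _ _ _ _ (es_inl H1) _ _ H3); subst.
      rewrite envjoin_h_r ejoin_h_r; auto.
    + simpl in H3. inversion H3; subst. inversion Hev; subst. inversion Hw; subst. inversion Hw'; subst.
      edestruct IHeslice as [? ?]; [eassumption|eassumption|eassumption|eassumption|eassumption|]; subst.
      split; reflexivity.
  - inversion H2; subst.
    + rewrite vjoin_h_r in H3. destruct (eslice_det _ _ _ _ (es_inr H1) _ _ H3); subst.
      rewrite envjoin_h_r ejoin_h_r; auto.
    + simpl in H3. inversion H3; subst. inversion Hev; subst. inversion Hw; subst. inversion Hw'; subst.
      edestruct IHeslice as [? ?]; [eassumption|eassumption|eassumption|eassumption|eassumption|]; subst.
      split; reflexivity.
  - inversion H2; subst.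
    + rewrite vjoin_h_r in H3. destruct (eslice_det _ _ _ _ (es_pair H1_ H1_0) _ _ H3); subst.
      rewrite envjoin_h_r ejoin_h_r; auto.
    + simpl in H3. inversion H3; subst. inversion Hev; subst. inversion Hw; subst. inversion Hw'; subst.
      edestruct IHeslice1 as [? ?]; [eassumption|eassumption|eassumption|eassumption|eassumption|]; subst.
      edestruct IHeslice2 as [? ?]; [eassumption|eassumption|eassumption|eassumption|eassumption|]; subst.
      split; [|reflexivity].
      apply (envjoin_inter _ _ _ _ s).
      all: eapply eslice_sound_env; eassumption.
  - inversion H2; subst.
    + rewrite vjoin_h_r in H3. destruct (eslice_det _ _ _ _ (es_fst H H1) _ _ H3); subst.
      rewrite envjoin_h_r ejoin_h_r; auto.
    + remember (vjoin v w') as u. inversion H3; subst.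
      * destruct (vjoin_eqH _ _ (esym H0)); contradiction.
      * inversion Hev; subst.
        edestruct (IHeslice s (VPair vv v2) (VPair w' VHole)) as [? ?]; try eassumption.
        -- constructor; auto; constructor.
        -- constructor; auto; constructor.
        -- subst; split; reflexivity.
  - inversion H2; subst.
    + rewrite vjoin_h_r in H3. destruct (eslice_det _ _ _ _ (es_snd H H1) _ _ H3); subst.
      rewrite envjoin_h_r ejoin_h_r; auto.
    + remember (vjoin v w') as u. inversion H3; subst.
      * destruct (vjoin_eqH _ _ (esym H0)); contradiction.
      * inversion Hev; subst.
        edestruct (IHeslice s (VPair v1 vv) (VPair VHole w')) as [? ?]; try eassumption.
        -- constructor; auto; constructor.
        -- constructor; auto; constructor.
        -- subst; split; reflexivity.
Qed.

Unset Implicit Arguments.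
Local Open Scope fset_scope.
Set Implicit Arguments.
Arguments envle_upd_at {r s x v}.
Arguments envle_upd_hole {r s x v}.
Arguments envle_upd {r s x v}.

Lemma frame T s n M n' S : ceval T s n M n' S -> forall l, l \notin writes T -> n' l = n l.
Proof.
  induction 1; intros l0 Hl; simpl in Hl; auto.
  - unfold upd. rewrite in_fset1 in Hl. by rewrite (negbTE Hl).
  - unfold upd. rewrite in_fset1 in Hl. by rewrite (negbTE Hl).
  - rewrite in_fsetU negb_or in Hl. case/andP: Hl => H1 H2. rewrite IHceval2 //. auto.
  - rewrite in_fsetU negb_or in Hl. case/andP: Hl => H1 H2. rewrite IHceval2 //. auto.
Qed.

Lemma erase_at m L l : erase m L = m -> l \in L -> m l = VHole.
Proof. intros H Hl. rewrite -H /erase Hl //. Qed.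

Lemma erase_intro m L : (forall l, l \in L -> m l = VHole) -> erase m L = m.
Proof. intros H; apply functional_extensionality; intro l; unfold erase; case E: (l \in L); auto. rewrite H //. Qed.

Lemma erase_sub m L L' : erase m L = m -> L' `<=` L -> erase m L' = m.
Proof. intros H Hs; apply erase_intro; intros l Hl; eapply erase_at; [exact H| exact (fsubsetP Hs l Hl)]. Qed.

Lemma stle_frame T s n M n' S mu : ceval T s n M n' S -> stle mu n' -> erase mu (writes T) = mu -> stle mu n.
Proof.
  intros Hc Hle He l. case E: (l \in writes T).
  - rewrite (erase_at _ He E); constructor.
  - rewrite -(frame Hc l); [auto| by rewrite E].
Qed.


Close Scope fset_scope.
Unset Implicit Arguments.

(* "fixing" a possibly-garbled slice against a reference: binder names are
   taken from the reference *)
Fixpoint fixe (c w : iexpr) {struct c} : iexpr :=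
  match c, w with
  | EInl a, EInl b => EInl (fixe a b)
  | EInr a, EInr b => EInr (fixe a b)
  | EPair a1 a2, EPair b1 b2 => EPair (fixe a1 b1) (fixe a2 b2)
  | EFst a, EFst b => EFst (fixe a b)
  | ESnd a, ESnd b => ESnd (fixe a b)
  | EFun f x M, EFun _ _ N => EFun f x (fixc M N)
  | _, _ => w
  end
with fixc (c w : icomp) {struct c} : icomp :=
  match c, w with
  | CRet a, CRet b => CRet (fixe a b)
  | CLet x A1 A2, CLet _ B1 B2 => CLet x (fixc A1 B1) (fixc A2 B2)
  | CApp a1 a2, CApp b1 b2 => CApp (fixe a1 b1) (fixe a2 b2)
  | CCase a x A1 y A2, CCase b _ B1 _ B2 => CCase (fixe a b) x (fixc A1 B1) y (fixc A2 B2)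
  | CRaise a, CRaise b => CRaise (fixe a b)
  | CTry A1 x A2, CTry B1 _ B2 => CTry (fixc A1 B1) x (fixc A2 B2)
  | CRef a, CRef b => CRef (fixe a b)
  | CAssign a1 a2, CAssign b1 b2 => CAssign (fixe a1 b1) (fixe a2 b2)
  | CDeref a, CDeref b => CDeref (fixe a b)
  | _, _ => w
  end.

Fixpoint fixv (c w : ivalue) {struct c} : ivalue :=
  match c, w with
  | VInl a, VInl b => VInl (fixv a b)
  | VInr a, VInr b => VInr (fixv a b)
  | VPair a1 a2, VPair b1 b2 => VPair (fixv a1 b1) (fixv a2 b2)
  | VClo s f x M, VClo r _ _ N => VClo (fun y => fixv (s y) (r y)) f x (fixc M N)
  | _, _ => w
  end.

Definition fixf (s r : nat -> ivalue) : nat -> ivalue := fun y => fixv (s y) (r y).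

Fixpoint fixt (c w : itrace) {struct c} : itrace :=
  match c, w with
  | TRet a, TRet b => TRet (fixe a b)
  | TLetF A, TLetF B => TLetF (fixt A B)
  | TLetS A1 x A2, TLetS B1 _ B2 => TLetS (fixt A1 B1) x (fixt A2 B2)
  | TApp a1 a2 f x A, TApp b1 b2 _ _ B => TApp (fixe a1 b1) (fixe a2 b2) f x (fixt A B)
  | TCaseL a x A y, TCaseL b _ B _ => TCaseL (fixe a b) x (fixt A B) y
  | TCaseR a x y A, TCaseR b _ _ B => TCaseR (fixe a b) x y (fixt A B)
  | TRaise a, TRaise b => TRaise (fixe a b)
  | TTryS A, TTryS B => TTryS (fixt A B)
  | TTryF A1 x A2, TTryF B1 _ B2 => TTryF (fixt A1 B1) x (fixt A2 B2)
  | TRef l a, TRef _ b => TRef l (fixe a b)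
  | TAssign l a1 a2, TAssign _ b1 b2 => TAssign l (fixe a1 b1) (fixe a2 b2)
  | TDeref l a, TDeref _ b => TDeref l (fixe a b)
  | _, _ => w
  end.

Lemma fixv_hole c : fixv c VHole = VHole.
Proof. destruct c; reflexivity. Qed.
Lemma fixe_hole c : fixe c EHole = EHole.
Proof. destruct c; reflexivity. Qed.
Lemma fixc_hole c : fixc c CHole = CHole.
Proof. destruct c; reflexivity. Qed.
Lemma fixf_hole s : fixf s env_hole = env_hole.
Proof. apply functional_extensionality => y; apply fixv_hole. Qed.

Lemma fixv_nonhole c w : w <> VHole -> fixv c w <> VHole.
Proof. destruct c, w; simpl; congruence. Qed.
Lemma fixv_eqH c w : fixv c w = VHole -> w = VHole.
Proof. destruct c, w; simpl; congruence. Qed.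

Lemma fix_id :
  (forall w c, ele w c -> fixe c w = w) /\ (forall w c, cle w c -> fixc c w = w).
Proof.
  split; [apply (ele_mut (fun w c _ => fixe c w = w) (fun w c _ => fixc c w = w))
         |apply (cle_mut (fun w c _ => fixe c w = w) (fun w c _ => fixc c w = w))];
  intros; simpl; try (apply fixe_hole || apply fixc_hole); congruence.
Qed.
Definition fixe_id := proj1 fix_id.
Definition fixc_id := proj2 fix_id.

Lemma fixv_id w c : vle w c -> fixv c w = w.
Proof.
  induction 1; simpl; try (apply fixv_hole); try congruence.
  f_equal; [apply functional_extensionality; auto| apply fixc_id; auto].
Qed.

Lemma fixf_id r s : envle r s -> fixf s r = r.
Proof. intros H; apply functional_extensionality => y; apply fixv_id, H. Qed.

Lemma fixt_id U T : tle U T -> fixt T U = U.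
Proof.
  induction 1; simpl; try (destruct T; reflexivity);
  repeat match goal with H : ele ?a ?b |- _ => rewrite (fixe_id _ _ H); clear H end; congruence.
Qed.

Definition Phe c := forall aa bb, ele (fixe c aa) c -> ele (fixe c bb) c -> fixe c (ejoin aa bb) = ejoin (fixe c aa) (fixe c bb).
Definition Phc c := forall aa bb, cle (fixc c aa) c -> cle (fixc c bb) c -> fixc c (cjoin aa bb) = cjoin (fixc c aa) (fixc c bb).

Lemma fix_hom : (forall c, Phe c) /\ (forall c, Phc c).
Proof.
  split; [apply (iexpr_mut Phe Phc) | apply (icomp_mut Phe Phc)]; unfold Phe, Phc;
  intros until aa; intros bb Ha Hb;
  destruct aa; simpl in Ha |- *; try reflexivity; try (inversion Ha; fail);
  destruct bb; simpl in Hb |- *; try reflexivity; try (inversion Hb; fail);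
  inversion Ha; inversion Hb; subst; f_equal; auto.
Qed.
Definition fixe_hom := proj1 fix_hom.
Definition fixc_hom := proj2 fix_hom.

Lemma fixv_hom c : forall a b, vle (fixv c a) c -> vle (fixv c b) c ->
  fixv c (vjoin a b) = vjoin (fixv c a) (fixv c b).
Proof.
  induction c; intros aa bb Ha Hb;
  destruct aa; simpl in Ha |- *; try reflexivity; try (inversion Ha; fail);
  destruct bb; simpl in Hb |- *; try reflexivity; try (inversion Hb; fail);
  inversion Ha; inversion Hb; subst; f_equal; auto.
  - apply functional_extensionality => y; auto.
  - apply fixc_hom; auto.
Qed.

Lemma fixf_hom s a b : envle (fixf s a) s -> envle (fixf s b) s ->
  fixf s (envjoin a b) = envjoin (fixf s a) (fixf s b).
Proof. intros Ha Hb; apply functional_extensionality => y; apply fixv_hom; [apply Ha|apply Hb]. Qed.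

Set Implicit Arguments.
Lemma fixf_upd_env s x w : fixf s (upd env_hole x w) = upd env_hole x (fixv (s x) w).
Proof. apply functional_extensionality => y; rewrite /fixf /upd; case: eqP => [->|_] //; apply fixv_hole. Qed.

Lemma eslice_fix w e r e' : eslice w e r e' ->
  forall s v, eeval s e v -> vle (fixv v w) v -> eslice (fixv v w) e (fixf s r) (fixe e e').
Proof.
  induction 1; intros s vv Hev Hle.
  - rewrite fixv_hole fixf_hole fixe_hole; constructor.
  - inversion Hev; subst. rewrite fixf_upd_env. simpl. constructor. by apply fixv_nonhole.
  - inversion Hev; subst. simpl. constructor.
  - inversion Hev; subst. rewrite fixf_hole. simpl. constructor.
  - inversion Hev; subst. simpl in Hle |- *. inversion Hle; subst. constructor. auto.
  - inversion Hev; subst. simpl in Hle |- *. inversion Hle; subst. constructor. auto.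
  - inversion Hev; subst. simpl in Hle |- *. inversion Hle; subst.
    match goal with
    | Ha : eeval s e1 ?va, Hb : eeval s e2 ?vb, Hc : vle (fixv ?va v1) ?va, Hd : vle (fixv ?vb v2) ?vb |- _ =>
      have H1' := IHeslice1 _ _ Ha Hc; have H2' := IHeslice2 _ _ Hb Hd;
      rewrite fixf_hom; [constructor; auto| |];
      [eapply eslice_sound_env; [exact H1'|exact Ha|exact Hc]
      |eapply eslice_sound_env; [exact H2'|exact Hb|exact Hd]]
    end.
  - inversion Hev; subst. simpl.
    have H1' := IHeslice s (VPair vv v2) H3. simpl in H1'. rewrite fixv_hole in H1'.
    constructor; [by apply fixv_nonhole|]. apply H1'. constructor; auto; constructor.
  - inversion Hev; subst. simpl.
    have H1' := IHeslice s (VPair v1 vv) H3. simpl in H1'. rewrite fixv_hole in H1'.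
    constructor; [by apply fixv_nonhole|]. apply H1'. constructor; auto; constructor.
Qed.

Lemma eslice_join_fix s e v w1 w2 w3 r1 r2 r3 e1 e2 e3 :
  eeval s e v -> eslice w1 e r1 e1 -> eslice w2 e r2 e2 -> eslice w3 e r3 e3 ->
  vle (fixv v w1) v -> vle (fixv v w2) v ->
  fixv v w3 = vjoin (fixv v w1) (fixv v w2) ->
  fixf s r3 = envjoin (fixf s r1) (fixf s r2) /\ fixe e e3 = ejoin (fixe e e1) (fixe e e2).
Proof.
  intros Hev H1 H2 H3 Hw1 Hw2 Heq.
  have Hw3 : vle (fixv v w3) v by rewrite Heq; apply vjoin_lub.
  have F1 := eslice_fix H1 Hev Hw1. have F2 := eslice_fix H2 Hev Hw2. have F3 := eslice_fix H3 Hev Hw3.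
  rewrite Heq in F3.
  exact (eslice_join _ _ _ _ F1 _ _ _ _ _ _ _ Hev Hw1 Hw2 F2 F3).
Qed.

Lemma fixf_upd_hole s r x v : fixf s (upd r x VHole) = upd (fixf (upd s x v) r) x VHole.
Proof. apply functional_extensionality => y; rewrite /fixf /upd; case: eqP => [->|_] //; apply fixv_hole. Qed.

Lemma fixf_upd_at s r x v : fixf (upd s x v) r x = fixv v (r x).
Proof. by rewrite /fixf /upd eqxx. Qed.

Unset Implicit Arguments.
Set Implicit Arguments.
Arguments envle_upd_at {r s x v}.
Arguments envle_upd_hole {r s x v}.
Arguments envle_upd {r s x v}.

Definition gst (n m : store) := stle (fixf n m) n.
Definition gres (S R : result) :=
  match R, S with Res k v, Res k' w => k = k' /\ vle (fixv w v) w end.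
Definition fixres (S R : result) :=
  match R, S with Res k v, Res _ w => Res k (fixv w v) end.

Lemma fixf_frame T s n M n' S mu : ceval T s n M n' S -> erase mu (writes T) = mu ->
  fixf n mu = fixf n' mu.
Proof.
  intros Hc He; apply functional_extensionality => l; rewrite /fixf.
  case E: (l \in writes T).
  - by rewrite (erase_at _ He E) !fixv_hole.
  - rewrite (frame Hc l) //. by rewrite E.
Qed.

Lemma gst_frame T s n M n' S mu : ceval T s n M n' S -> erase mu (writes T) = mu ->
  gst n' mu -> gst n mu.
Proof.
  intros Hc He H l; move: (H l); rewrite /fixf.
  case E: (l \in writes T).
  - rewrite (erase_at _ He E) !fixv_hole => _; constructor.
  - rewrite (frame Hc l) //. by rewrite E.
Qed.

Lemma clo_bound1 (r0 r' : env) f x M v2 :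
  envle r0 (upd (upd r' f (VClo r' f x M)) x v2) -> vle (upd r0 x VHole f) (VClo r' f x M).
Proof. intros Hr. move: (Hr f); rewrite /upd; case: (f == x); [constructor|]. by rewrite eqxx. Qed.

Lemma clo_bound2 (r0 r' : env) f x M M0 v2 :
  envle r0 (upd (upd r' f (VClo r' f x M)) x v2) -> cle M0 M ->
  vle (VClo (upd (upd r0 x VHole) f VHole) f x M0) (VClo r' f x M).
Proof.
  intros Hr HM. constructor; auto. intro y; move: (Hr y); rewrite /upd.
  case: (y == f); [constructor|]. case: (y == x); [constructor|]. auto.
Qed.

Lemma clo_bound (r0 r' : env) f x M M0 v2 :
  envle r0 (upd (upd r' f (VClo r' f x M)) x v2) -> cle M0 M ->
  vle (vjoin (upd r0 x VHole f) (VClo (upd (upd r0 x VHole) f VHole) f x M0)) (VClo r' f x M).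
Proof. intros; apply vjoin_lub; [eapply clo_bound1|eapply clo_bound2]; eauto. Qed.

Definition appval (r : env) f x M0 :=
  vjoin (upd r x VHole f) (VClo (upd (upd r x VHole) f VHole) f x M0).

Lemma fix_appval r0 f x M r' M0 v2 :
  envle (fixf (upd (upd r0 f (VClo r0 f x M)) x v2) r') (upd (upd r0 f (VClo r0 f x M)) x v2) ->
  cle (fixc M M0) M ->
  fixv (VClo r0 f x M) (appval r' f x M0) = appval (fixf (upd (upd r0 f (VClo r0 f x M)) x v2) r') f x (fixc M M0).
Proof.
  intros Hr HM.
  have E1 : fixv (VClo r0 f x M) (upd r' x VHole f) = upd (fixf (upd (upd r0 f (VClo r0 f x M)) x v2) r') x VHole f.
  { rewrite /upd /fixf; case: eqP => [_|Hne]; [apply fixv_hole|]. by rewrite eqxx. }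
  have E2 : fixv (VClo r0 f x M) (VClo (upd (upd r' x VHole) f VHole) f x M0) =
            VClo (upd (upd (fixf (upd (upd r0 f (VClo r0 f x M)) x v2) r') x VHole) f VHole) f x (fixc M M0).
  { simpl. f_equal. apply functional_extensionality => y. rewrite /upd /fixf.
    case Ef: (y == f); [apply fixv_hole|]. case Ex: (y == x); [apply fixv_hole|]. done. }
  rewrite /appval fixv_hom.
  - by rewrite E1 E2.
  - rewrite E1. eapply clo_bound1; eauto.
  - rewrite E2. eapply clo_bound2; eauto.
Qed.

Lemma esl_fs w e r e' s v : eslice w e r e' -> eeval s e v -> vle (fixv v w) v ->
  envle (fixf s r) s /\ ele (fixe e e') e.
Proof.
  intros H1 H2 H3. have F := eslice_fix H1 H2 H3.
  split; [eapply eslice_sound_env|eapply eslice_sound_e]; eauto.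
Qed.

Lemma fixf_join_le s a b : envle (fixf s a) s -> envle (fixf s b) s -> envle (fixf s (envjoin a b)) s.
Proof. intros; rewrite fixf_hom //; apply envjoin_lub; auto. Qed.

Lemma gst_upd_hole n m l v : gst (upd n l v) m -> gst n (upd m l VHole).
Proof. rewrite /gst => H. rewrite (fixf_upd_hole _ _ _ v). exact (envle_upd_hole H). Qed.

Lemma envle_fix_upd_hole s r x v : envle (fixf (upd s x v) r) (upd s x v) -> envle (fixf s (upd r x VHole)) s.
Proof. intros H. rewrite (fixf_upd_hole _ _ _ v). exact (envle_upd_hole H). Qed.

Lemma fix_at_le s r x v : envle (fixf (upd s x v) r) (upd s x v) -> vle (fixv v (r x)) v.
Proof. intros H. rewrite -(fixf_upd_at s r x v). exact (envle_upd_at H). Qed.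

Ltac hole_case Hc0 :=
  split; [rewrite fixf_hole; apply envle_hole
         | split; [eapply gst_frame; [exact Hc0|eassumption|eassumption]
                  | rewrite fixc_hole; constructor]].

Lemma slice_sound T s n M n' S : ceval T s n M n' S ->
  forall mu R r m N U, gst n' mu -> gres S R -> cslice mu R T r m N U ->
  envle (fixf s r) s /\ gst n m /\ cle (fixc M N) M.
Proof.
  intros Hc; pose proof Hc as Hc0; revert Hc0.
  induction Hc; intros Hc0 mu R0 r0 m0 N0 U0 Hmu HR Hs; inversion Hs; subst;
    try (hole_case Hc0; fail).
  -
    destruct HR as [_ HR]. match goal with H1 : eslice _ _ _ _ |- _ => destruct (esl_fs H1 H HR) end.
    split; auto. split; auto. simpl; constructor; auto.
  -
    edestruct IHHc as (Hr & Hm & HN); [exact Hc| exact Hmu| exact HR| eassumption|].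
    have Hx := fix_at_le Hr.
    destruct (esl_fs H14 H0 Hx) as [Hr2 He2].
    have Hv := @fix_appval _ _ _ _ _ _ _ Hr HN.
    have Hb := clo_bound Hr HN.
    change (vle (appval (fixf (upd (upd r' f (VClo r' f x M)) x v2) r'0) f x (fixc M M0)) (VClo r' f x M)) in Hb.
    rewrite -Hv in Hb.
    change (eslice (appval r'0 f x M0) e1 r1 e1') in H15.
    destruct (esl_fs H15 H Hb) as [Hr1 He1].
    split; [apply fixf_join_le; auto|]. split; auto. simpl; constructor; auto.
  -
    destruct HR as [_ HR]. match goal with H1 : eslice _ _ _ _ |- _ => destruct (esl_fs H1 H HR) end.
    split; auto. split; auto. simpl; constructor; auto.
  -
    have Hl := fix_at_le Hmu.
    match goal with H1 : eslice _ _ _ _ |- _ => destruct (esl_fs H1 H Hl) end.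
    split; auto. split; [exact (gst_upd_hole Hmu)|]. simpl; constructor; auto.
  -
    have Hl := fix_at_le Hmu.
    match goal with H1 : eslice (mu l) _ _ _, H2 : eslice (VLoc l) _ _ _ |- _ =>
      destruct (esl_fs H1 H0 Hl); destruct (esl_fs H2 H (vle_loc l)) end.
    split; [apply fixf_join_le; auto|]. split; [exact (gst_upd_hole Hmu)|]. simpl; constructor; auto.
  -
    destruct HR as [_ HR].
    match goal with H2 : eslice (VLoc l) _ _ _ |- _ => destruct (esl_fs H2 H (vle_loc l)) end.
    have Hu : gst m (upd store_hole l v).
    { rewrite /gst. change store_hole with env_hole. rewrite fixf_upd_env.
      intro y; apply envle_upd; [apply envle_hole|exact HR]. }
    split; auto. split; [|simpl; constructor; auto].
    rewrite /gst. change (stle (fixf m (envjoin mu (upd store_hole l v))) m).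
    apply fixf_join_le; auto.
  -
    edestruct IHHc2 as (Hr & Hm & HN); [exact Hc2| exact Hmu| exact HR| eassumption|].
    have Hx := fix_at_le Hr.
    edestruct IHHc1 as (Hr1 & Hm1 & HN1); [exact Hc1| exact Hm| idtac | eassumption|]; [simpl; split; [reflexivity|exact Hx]|].
    split; [apply fixf_join_le; auto; exact (envle_fix_upd_hole Hr)|]. split; auto. simpl; constructor; auto.
  -
    edestruct IHHc as (Hr & Hm & HN); [exact Hc| exact Hmu| exact HR| eassumption|].
    split; auto. split; auto. simpl; rewrite fixc_hole; constructor; auto; constructor.
  -
    edestruct IHHc2 as (Hr & Hm & HN); [exact Hc2| exact Hmu| exact HR| eassumption|].
    have Hx := fix_at_le Hr.
    edestruct IHHc1 as (Hr1 & Hm1 & HN1); [exact Hc1| exact Hm| idtac | eassumption|]; [simpl; split; [reflexivity|exact Hx]|].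
    split; [apply fixf_join_le; auto; exact (envle_fix_upd_hole Hr)|]. split; auto. simpl; constructor; auto.
  -
    edestruct IHHc as (Hr & Hm & HN); [exact Hc| exact Hmu| exact HR| eassumption|].
    split; auto. split; auto. simpl; rewrite fixc_hole; constructor; auto; constructor.
  -
    edestruct IHHc as (Hr & Hm & HN); [exact Hc| exact Hmu| exact HR| eassumption|].
    have Hx := fix_at_le Hr.
    match goal with H2 : eslice _ e _ _ |- _ =>
      destruct (esl_fs H2 H (vle_inl Hx)) as [Hr2 He2] end.
    split; [apply fixf_join_le; auto; exact (envle_fix_upd_hole Hr)|]. split; auto.
    simpl; rewrite fixc_hole; constructor; auto; constructor.
  -
    edestruct IHHc as (Hr & Hm & HN); [exact Hc| exact Hmu| exact HR| eassumption|].
    have Hx := fix_at_le Hr.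
    match goal with H2 : eslice _ e _ _ |- _ =>
      destruct (esl_fs H2 H (vle_inr Hx)) as [Hr2 He2] end.
    split; [apply fixf_join_le; auto; exact (envle_fix_upd_hole Hr)|]. split; auto.
    simpl; rewrite fixc_hole; constructor; auto; constructor.
Qed.

Unset Implicit Arguments.
Set Implicit Arguments.

Definition concl s n M T r m N U r' m' N' U' r'' m'' N'' U'' :=
  fixf s r'' = envjoin (fixf s r) (fixf s r') /\ fixf n m'' = stjoin (fixf n m) (fixf n m') /\
  fixc M N'' = cjoin (fixc M N) (fixc M N') /\ fixt T U'' = tjoin (fixt T U) (fixt T U').

Definition Pm T s n M n' S := forall mu R mu' R' mu'' R'' r m N U r' m' N' U' r'' m'' N'' U'',
  gst n' mu -> gres S R -> gst n' mu' -> gres S R' ->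
  fixf n' mu'' = stjoin (fixf n' mu) (fixf n' mu') ->
  fixres S R'' = rjoin (fixres S R) (fixres S R') ->
  cslice mu R T r m N U -> cslice mu' R' T r' m' N' U' -> cslice mu'' R'' T r'' m'' N'' U'' ->
  concl s n M T r m N U r' m' N' U' r'' m'' N'' U''.

Definition Hstruct T s n M n' S := forall mu R mu' R' mu'' R'' r m N U r' m' N' U' r'' m'' N'' U'',
  gst n' mu -> gres S R -> gst n' mu' -> gres S R' ->
  fixf n' mu'' = stjoin (fixf n' mu) (fixf n' mu') ->
  fixres S R'' = rjoin (fixres S R) (fixres S R') ->
  ~ bhole_applies mu R T -> ~ bhole_applies mu' R' T -> ~ bhole_applies mu'' R'' T ->
  cslice mu R T r m N U -> cslice mu' R' T r' m' N' U' -> cslice mu'' R'' T r'' m'' N'' U'' ->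
  concl s n M T r m N U r' m' N' U' r'' m'' N'' U''.

Definition Hmixed T s n M n' S := forall mu k mu' R' mu'' R'' r' m' N' U' r'' m'' N'' U'',
  gst n' mu -> erase mu (writes T) = mu -> gres S (Res k VHole) -> gst n' mu' -> gres S R' ->
  fixf n' mu'' = stjoin (fixf n' mu) (fixf n' mu') ->
  fixres S R'' = fixres S R' ->
  ~ bhole_applies mu' R' T -> ~ bhole_applies mu'' R'' T ->
  cslice mu' R' T r' m' N' U' -> cslice mu'' R'' T r'' m'' N'' U'' ->
  fixf s r'' = fixf s r' /\ fixf n m'' = stjoin (fixf n mu) (fixf n m') /\
  fixc M N'' = fixc M N' /\ fixt T U'' = fixt T U'.

Lemma hole_out mu R T r m N U : bhole_applies mu R T -> cslice mu R T r m N U ->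
  exists k, R = Res k VHole /\ r = env_hole /\ m = mu /\ N = CHole /\ U = THole k (writes T).
Proof.
  intros Hb Hs; inversion Hs; subst; try (exfalso; match goal with H : ~ _ |- _ => apply H; exact Hb end).
  eauto 10.
Qed.

Lemma fixt_hole T k L : fixt T (THole k L) = THole k L.
Proof. destruct T; reflexivity. Qed.

Lemma nothole_out mu R T r m N U : ~ bhole_applies mu R T -> cslice mu R T r m N U ->
  forall k L, tjoin (fixt T U) (THole k L) = fixt T U.
Proof.
  intros Hb Hs; inversion Hs; subst; try (exfalso; apply Hb; split; eauto; fail); reflexivity.
Qed.

Lemma erase_fix n mu L : erase (fixf n mu) L = fixf n mu <-> erase mu L = mu.
Proof.
  split => H; apply erase_intro => l Hl.
  - apply (fixv_eqH (n l)). exact (erase_at _ H Hl).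
  - rewrite /fixf (erase_at _ H Hl); apply fixv_hole.
Qed.

Lemma stjoin_eqH_erase a b L : erase (stjoin a b) L = stjoin a b -> erase a L = a /\ erase b L = b.
Proof.
  intros H; split; apply erase_intro => l Hl; have := erase_at _ H Hl; rewrite /stjoin => E;
  destruct (vjoin_eqH _ _ E); auto.
Qed.

Lemma bh_join n' S T mu R mu' R' mu'' R'' :
  gres S R -> gres S R' ->
  fixf n' mu'' = stjoin (fixf n' mu) (fixf n' mu') ->
  fixres S R'' = rjoin (fixres S R) (fixres S R') ->
  (bhole_applies mu'' R'' T <-> bhole_applies mu R T /\ bhole_applies mu' R' T).
Proof.
  destruct S as [kS vS], R as [k v], R' as [k' v'], R'' as [k'' v''].
  simpl; intros [-> _] [-> _] Hm Hr; injection Hr => Hv Hk; subst.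
  split.
  - intros [[kk Ek] He]. injection Ek => Ev _; subst.
    rewrite fixv_hole in Hv. destruct (vjoin_eqH _ _ (esym Hv)) as [E1 E2].
    apply fixv_eqH in E1; apply fixv_eqH in E2; subst.
    apply erase_fix with (n := n') in He. rewrite Hm in He. destruct (stjoin_eqH_erase He) as [He1 He2].
    split; split; eauto; [apply (proj1 (erase_fix n' _ _)) | apply (proj1 (erase_fix n' _ _))]; auto.
  - intros [[[kk Ek] He] [[kk' Ek'] He']]. injection Ek => Ev _; injection Ek' => Ev' _; subst.
    rewrite !fixv_hole in Hv. apply fixv_eqH in Hv; subst.
    split; eauto. apply (proj1 (erase_fix n' _ _)). rewrite Hm.
    apply erase_intro => l Hl. rewrite /stjoin.
    rewrite (erase_at _ (proj2 (erase_fix n' _ _) He) Hl) (erase_at _ (proj2 (erase_fix n' _ _) He') Hl). done.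
Qed.

Lemma gres_hole_k S k : gres S (Res k VHole) -> fixres S (Res k VHole) = Res k VHole.
Proof. destruct S; simpl; intros _; by rewrite fixv_hole. Qed.

Lemma dispatch T s n M n' S : ceval T s n M n' S -> Hstruct T s n M n' S -> Hmixed T s n M n' S ->
  Pm T s n M n' S.
Proof.
  intros Hc HS HM mu R mu' R' mu'' R'' r m N U r' m' N' U' r'' m'' N'' U''
         Hmu HR Hmu' HR' Hm Hr Hs Hs' Hs''.
  have Hbj := @bh_join n' S T mu R mu' R' mu'' R'' HR HR' Hm Hr.
  destruct (classic (bhole_applies mu R T)) as [B1|B1];
  destruct (classic (bhole_applies mu' R' T)) as [B2|B2].
  - have B3 := proj2 Hbj (conj B1 B2).
    destruct (hole_out B1 Hs) as (k & -> & -> & -> & -> & ->).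
    destruct (hole_out B2 Hs') as (k' & -> & -> & -> & -> & ->).
    destruct (hole_out B3 Hs'') as (k'' & -> & -> & -> & -> & ->).
    destruct B1 as [_ E1]; destruct B2 as [_ E2]; destruct B3 as [_ E3].
    unfold concl. rewrite !fixf_hole !fixc_hole !fixt_hole.
    split; [reflexivity|]. split.
    + rewrite (fixf_frame Hc E1) (fixf_frame Hc E2) (fixf_frame Hc E3). exact Hm.
    + split; [reflexivity|]. destruct S as [kS vS]. simpl in Hr, HR, HR'.
      injection Hr => _ ->. destruct HR as [-> _]; destruct HR' as [-> _]. reflexivity.
  - have B3 : ~ bhole_applies mu'' R'' T by move/Hbj => [].
    destruct (hole_out B1 Hs) as (k & -> & -> & -> & -> & ->).
    have E1 := proj2 B1.
    have Hr2 : fixres S R'' = fixres S R'.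
    { rewrite Hr. destruct S as [kS vS], R' as [k' v']. simpl in *. rewrite fixv_hole.
      destruct HR as [-> _]; destruct HR' as [-> _]. reflexivity. }
    destruct (HM mu k mu' R' mu'' R'' r' m' N' U' r'' m'' N'' U'' Hmu E1 HR Hmu' HR' Hm Hr2 B2 B3 Hs' Hs'')
      as (H1 & H2 & H3 & H4).
    unfold concl. rewrite fixf_hole fixc_hole fixt_hole. split; [exact H1|]. split; [exact H2|].
    split; [exact H3|exact H4].
  - have B3 : ~ bhole_applies mu'' R'' T by move/Hbj => [].
    destruct (hole_out B2 Hs') as (k' & -> & -> & -> & -> & ->).
    have E2 := proj2 B2.
    have Hm2 : fixf n' mu'' = stjoin (fixf n' mu') (fixf n' mu).
    { rewrite Hm. exact (stjoin_comm _ _ _ Hmu Hmu'). }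
    have Hr2 : fixres S R'' = fixres S R.
    { rewrite Hr. destruct S as [kS vS], R as [k v]. simpl in *. rewrite fixv_hole.
      destruct HR as [-> _]; destruct HR' as [-> _]. simpl. by rewrite vjoin_h_r. }
    destruct (HM mu' k' mu R mu'' R'' r m N U r'' m'' N'' U'' Hmu' E2 HR' Hmu HR Hm2 Hr2 B1 B3 Hs Hs'')
      as (H1 & H2 & H3 & H4).
    destruct (slice_sound Hc Hmu HR Hs) as (_ & Hg & _).
    have Hg' : gst n mu' := gst_frame Hc E2 Hmu'.
    unfold concl. rewrite fixf_hole fixc_hole fixt_hole envjoin_h_r cjoin_h_r.
    split; [exact H1|]. split; [rewrite H2; exact (stjoin_comm _ _ _ Hg' Hg)|].
    split; [exact H3|]. rewrite (nothole_out B1 Hs). exact H4.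
  - have B3 : ~ bhole_applies mu'' R'' T by move/Hbj => [].
    exact (HS mu R mu' R' mu'' R'' r m N U r' m' N' U' r'' m'' N'' U'' Hmu HR Hmu' HR' Hm Hr B1 B2 B3 Hs Hs' Hs'').
Qed.

Unset Implicit Arguments.
Set Implicit Arguments.

Lemma eslice_eq_fix s e v w2 w3 r2 r3 e2 e3 :
  eeval s e v -> eslice w2 e r2 e2 -> eslice w3 e r3 e3 ->
  vle (fixv v w2) v -> fixv v w3 = fixv v w2 ->
  fixf s r3 = fixf s r2 /\ fixe e e3 = fixe e e2.
Proof.
  intros Hev H2 H3 Hw Heq.
  have := eslice_join_fix Hev (es_hole e) H2 H3 _ Hw.
  rewrite fixv_hole fixf_hole fixe_hole. intros X; apply X; [constructor|exact Heq].
Qed.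

Ltac kill_hole :=
  match goal with
  | Hb : ~ bhole_applies ?m ?R ?T, He : erase ?m (writes ?T) = ?m |- _ =>
      exfalso; apply Hb; split; [eauto|exact He]
  end.

Ltac inv3 Hs Hs' Hs'' :=
  inversion Hs; subst; try kill_hole;
  inversion Hs'; subst; try kill_hole;
  inversion Hs''; subst; try kill_hole.

Ltac inv2 Hs' Hs'' :=
  inversion Hs'; subst; try kill_hole;
  inversion Hs''; subst; try kill_hole.

Lemma case_ret s m e v : eeval s e v ->
  Hstruct (TRet e) s m (CRet e) m (Res Val v) /\ Hmixed (TRet e) s m (CRet e) m (Res Val v).
Proof.
  intros Hev; split.
  - intros mu R mu' R' mu'' R'' r mm N U r' m' N' U' r'' m'' N'' U''
           Hmu HR Hmu' HR' Hm Hr B1 B2 B3 Hs Hs' Hs''.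
    inv3 Hs Hs' Hs''.
    simpl in Hr, HR, HR'. injection Hr => Hv.
    destruct (eslice_join_fix Hev H3 H5 H7 (proj2 HR) (proj2 HR') Hv) as [E1 E2].
    unfold concl; simpl. rewrite E1 E2. auto.
  - intros mu k mu' R' mu'' R'' r' m' N' U' r'' m'' N'' U''
           Hmu E HR Hmu' HR' Hm Hr B2 B3 Hs' Hs''.
    inv2 Hs' Hs''.
    simpl in Hr, HR'. injection Hr => Hv.
    destruct (eslice_eq_fix Hev H3 H5 (proj2 HR') Hv) as [E1 E2].
    simpl. rewrite E1 E2. auto.
Qed.

Lemma case_raise s m e v : eeval s e v ->
  Hstruct (TRaise e) s m (CRaise e) m (Res Exn v) /\ Hmixed (TRaise e) s m (CRaise e) m (Res Exn v).
Proof.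
  intros Hev; split.
  - intros mu R mu' R' mu'' R'' r mm N U r' m' N' U' r'' m'' N'' U''
           Hmu HR Hmu' HR' Hm Hr B1 B2 B3 Hs Hs' Hs''.
    inv3 Hs Hs' Hs''.
    simpl in Hr, HR, HR'. injection Hr => Hv.
    match goal with H1 : eslice _ _ r _, H2 : eslice _ _ r' _, H3 : eslice _ _ r'' _ |- _ =>
      destruct (eslice_join_fix Hev H1 H2 H3 (proj2 HR) (proj2 HR') Hv) as [E1 E2] end.
    unfold concl; simpl. rewrite E1 E2. auto.
  - intros mu k mu' R' mu'' R'' r' m' N' U' r'' m'' N'' U''
           Hmu E HR Hmu' HR' Hm Hr B2 B3 Hs' Hs''.
    inv2 Hs' Hs''.
    simpl in Hr, HR'. injection Hr => Hv.
    match goal with H2 : eslice _ _ r' _, H3 : eslice _ _ r'' _ |- _ =>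
      destruct (eslice_eq_fix Hev H2 H3 (proj2 HR') Hv) as [E1 E2] end.
    simpl. rewrite E1 E2. auto.
Qed.

Lemma fixf_upd_at' (n mu : store) l v : fixv v (mu l) = fixf (upd n l v) mu l.
Proof. by rewrite fixf_upd_at. Qed.

Lemma case_ref s m e v l : eeval s e v -> ~ in_dom m l ->
  Hstruct (TRef l e) s m (CRef e) (upd m l v) (Res Val (VLoc l)) /\
  Hmixed (TRef l e) s m (CRef e) (upd m l v) (Res Val (VLoc l)).
Proof.
  intros Hev Hnd; split.
  - intros mu R mu' R' mu'' R'' r mm N U r' m' N' U' r'' m'' N'' U''
           Hmu HR Hmu' HR' Hm Hr B1 B2 B3 Hs Hs' Hs''.
    inv3 Hs Hs' Hs''.
    have Hv : fixv v (mu'' l) = vjoin (fixv v (mu l)) (fixv v (mu' l)).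
    { rewrite !(fixf_upd_at' m) Hm. reflexivity. }
    match goal with H1 : eslice _ _ r _, H2 : eslice _ _ r' _, H3 : eslice _ _ r'' _ |- _ =>
      destruct (eslice_join_fix Hev H1 H2 H3 (fix_at_le Hmu) (fix_at_le Hmu') Hv) as [E1 E2] end.
    unfold concl; simpl. rewrite E1 E2. split; auto. split; auto.
    rewrite !(fixf_upd_hole _ _ _ v) Hm. apply upd_hole_join.
  - intros mu k mu' R' mu'' R'' r' m' N' U' r'' m'' N'' U''
           Hmu E HR Hmu' HR' Hm Hr B2 B3 Hs' Hs''.
    inv2 Hs' Hs''.
    have El : mu l = VHole by apply (erase_at _ E); rewrite /= in_fset1.
    have Hv : fixv v (mu'' l) = fixv v (mu' l).
    { rewrite !(fixf_upd_at' m) Hm. rewrite /stjoin /fixf /upd eqxx El fixv_hole. reflexivity. }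
    match goal with H2 : eslice _ _ r' _, H3 : eslice _ _ r'' _ |- _ =>
      destruct (eslice_eq_fix Hev H2 H3 (fix_at_le Hmu') Hv) as [E1 E2] end.
    simpl. rewrite E1 E2. split; auto. split; auto.
    rewrite !(fixf_upd_hole _ _ _ v) Hm. apply functional_extensionality => y.
    rewrite /stjoin /fixf /upd. case: eqP => [->|_] //. by rewrite El !fixv_hole.
Qed.

Lemma esl_b w e r e' s v : eslice w e r e' -> eeval s e v -> vle (fixv v w) v -> envle (fixf s r) s.
Proof. intros; eapply esl_fs; eauto. Qed.

Lemma case_assign s m e1 e2 l v : eeval s e1 (VLoc l) -> eeval s e2 v ->
  Hstruct (TAssign l e1 e2) s m (CAssign e1 e2) (upd m l v) (Res Val VUnit) /\
  Hmixed (TAssign l e1 e2) s m (CAssign e1 e2) (upd m l v) (Res Val VUnit).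
Proof.
  intros Hev1 Hev2; split.
  - intros mu R mu' R' mu'' R'' r mm N U r' m' N' U' r'' m'' N'' U''
           Hmu HR Hmu' HR' Hm Hr B1 B2 B3 Hs Hs' Hs''.
    inv3 Hs Hs' Hs''.
    have Hv : fixv v (mu'' l) = vjoin (fixv v (mu l)) (fixv v (mu' l)).
    { rewrite !(fixf_upd_at' m) Hm. reflexivity. }
    match goal with
      H1 : eslice (mu l) _ ?ra _, H2 : eslice (mu' l) _ ?rb _, H3 : eslice (mu'' l) _ ?rc _,
      G1 : eslice (VLoc l) _ ?qa _, G2 : eslice (VLoc l) _ ?qb _, G3 : eslice (VLoc l) _ ?qc _ |- _ =>
      destruct (eslice_join_fix Hev2 H1 H2 H3 (fix_at_le Hmu) (fix_at_le Hmu') Hv) as [E1 E2];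
      destruct (eslice_join_fix Hev1 G1 G2 G3 (vle_loc l) (vle_loc l) erefl) as [F1 F2];
      have Ba := esl_b H1 Hev2 (fix_at_le Hmu); have Bb := esl_b H2 Hev2 (fix_at_le Hmu');
      have Ca := esl_b G1 Hev1 (vle_loc l); have Cb := esl_b G2 Hev1 (vle_loc l);
      unfold concl; simpl; rewrite E2 F2; split; [|split; [|split; reflexivity]];
      [ rewrite (fixf_hom _ qc rc); [|rewrite F1; apply envjoin_lub; auto|rewrite E1; apply envjoin_lub; auto];
        rewrite F1 E1 (fixf_hom _ qa ra Ca Ba) (fixf_hom _ qb rb Cb Bb);
        apply (envjoin_inter _ _ _ _ s); auto
      | ]
    end.
    + rewrite !(fixf_upd_hole _ _ _ v) Hm. apply upd_hole_join.
  - intros mu k mu' R' mu'' R'' r' m' N' U' r'' m'' N'' U''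
           Hmu E HR Hmu' HR' Hm Hr B2 B3 Hs' Hs''.
    inv2 Hs' Hs''.
    have El : mu l = VHole by apply (erase_at _ E); rewrite /= in_fset1.
    have Hv : fixv v (mu'' l) = fixv v (mu' l).
    { rewrite !(fixf_upd_at' m) Hm. rewrite /stjoin /fixf /upd eqxx El fixv_hole. reflexivity. }
    match goal with
      H2 : eslice (mu' l) _ ?rb _, H3 : eslice (mu'' l) _ ?rc _,
      G2 : eslice (VLoc l) _ ?qb _, G3 : eslice (VLoc l) _ ?qc _ |- _ =>
      destruct (eslice_eq_fix Hev2 H2 H3 (fix_at_le Hmu') Hv) as [E1 E2];
      destruct (eslice_eq_fix Hev1 G2 G3 (vle_loc l) erefl) as [F1 F2];
      have Bb := esl_b H2 Hev2 (fix_at_le Hmu');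
      have Cb := esl_b G2 Hev1 (vle_loc l);
      simpl; rewrite E2 F2; split; [|split; [|split; reflexivity]];
      [ rewrite (fixf_hom _ qc rc); [|rewrite F1; auto|rewrite E1; auto];
        rewrite F1 E1 (fixf_hom _ qb rb Cb Bb); reflexivity
      | ]
    end.
    rewrite !(fixf_upd_hole _ _ _ v) Hm. apply functional_extensionality => y.
    rewrite /stjoin /fixf /upd. case: eqP => [->|_] //. by rewrite El !fixv_hole.
Qed.

Lemma deref_store (m mu : store) l v : gst m mu -> vle (fixv (m l) v) (m l) ->
  fixf m (stjoin mu (upd store_hole l v)) = stjoin (fixf m mu) (upd store_hole l (fixv (m l) v)) /\
  stle (upd store_hole l (fixv (m l) v)) m.
Proof.
  intros Hg Hv.
  have Hu : fixf m (upd store_hole l v) = upd store_hole l (fixv (m l) v).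
  { change store_hole with env_hole. apply fixf_upd_env. }
  have Hb : stle (upd store_hole l (fixv (m l) v)) m.
  { intro y; rewrite /upd; case: eqP => [->|_] //; constructor. }
  split; auto.
  change (fixf m (envjoin mu (upd store_hole l v)) = stjoin (fixf m mu) (upd store_hole l (fixv (m l) v))).
  rewrite fixf_hom; [by rewrite Hu| exact Hg| rewrite Hu; exact Hb].
Qed.

Lemma upd_sh_join l a b : upd store_hole l (vjoin a b) = stjoin (upd store_hole l a) (upd store_hole l b).
Proof. apply functional_extensionality => y; rewrite /stjoin /upd; case: eqP => //. Qed.

Lemma case_deref s m e l : eeval s e (VLoc l) -> in_dom m l ->
  Hstruct (TDeref l e) s m (CDeref e) m (Res Val (m l)) /\
  Hmixed (TDeref l e) s m (CDeref e) m (Res Val (m l)).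
Proof.
  intros Hev Hd; split.
  - intros mu R mu' R' mu'' R'' r mm N U r' m' N' U' r'' m'' N'' U''
           Hmu HR Hmu' HR' Hm Hr B1 B2 B3 Hs Hs' Hs''.
    inv3 Hs Hs' Hs''.
    simpl in Hr, HR, HR'. injection Hr => Hv.
    match goal with G1 : eslice (VLoc l) _ r _, G2 : eslice (VLoc l) _ r' _, G3 : eslice (VLoc l) _ r'' _ |- _ =>
      destruct (eslice_join_fix Hev G1 G2 G3 (vle_loc l) (vle_loc l) erefl) as [F1 F2] end.
    unfold concl; simpl; rewrite F1 F2; split; [reflexivity|]; split; [|split; reflexivity].
    have Hmu'' : gst m mu'' by rewrite /gst Hm; apply stjoin_lub.
    have HR'' : vle (fixv (m l) v1) (m l) by rewrite Hv; apply vjoin_lub; [exact (proj2 HR)|exact (proj2 HR')].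
    destruct (deref_store l _ Hmu (proj2 HR)) as [D1 B1'].
    destruct (deref_store l _ Hmu' (proj2 HR')) as [D2 B2'].
    destruct (deref_store l _ Hmu'' HR'') as [D3 _].
    rewrite D1 D2 D3 Hm Hv upd_sh_join.
    apply (stjoin_inter _ _ _ _ m); auto.
  - intros mu k mu' R' mu'' R'' r' m' N' U' r'' m'' N'' U''
           Hmu E HR Hmu' HR' Hm Hr B2 B3 Hs' Hs''.
    inv2 Hs' Hs''.
    simpl in Hr, HR'. injection Hr => Hv.
    match goal with G2 : eslice (VLoc l) _ r' _, G3 : eslice (VLoc l) _ r'' _ |- _ =>
      destruct (eslice_eq_fix Hev G2 G3 (vle_loc l) erefl) as [F1 F2] end.
    simpl; rewrite F1 F2; split; [reflexivity|]; split; [|split; reflexivity].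
    have Hmu'' : gst m mu'' by rewrite /gst Hm; apply stjoin_lub.
    have HR'' : vle (fixv (m l) v0) (m l) by rewrite Hv; exact (proj2 HR').
    destruct (deref_store l _ Hmu' (proj2 HR')) as [D2 B2'].
    destruct (deref_store l _ Hmu'' HR'') as [D3 _].
    rewrite D2 D3 Hm Hv.
    apply (stjoin_assoc _ _ _ m); auto.
Qed.

Unset Implicit Arguments.
Set Implicit Arguments.
Local Open Scope fset_scope.

Lemma envjoin_h_l r : envjoin env_hole r = r.
Proof. reflexivity. Qed.
Lemma stjoin_h_l r : stjoin store_hole r = r.
Proof. reflexivity. Qed.
Lemma cjoin_h_l N : cjoin CHole N = N.
Proof. reflexivity. Qed.
Lemma tjoin_h_l k L U : tjoin (THole k L) U = U.
Proof. reflexivity. Qed.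

Lemma gres_join S R R' R'' : gres S R -> gres S R' -> fixres S R'' = rjoin (fixres S R) (fixres S R') -> gres S R''.
Proof.
  destruct S as [kS vS], R as [k v], R' as [k' v'], R'' as [k'' v'']; simpl.
  intros [-> H1] [-> H2] E; injection E => -> ->; split; auto. apply vjoin_lub; auto.
Qed.

Lemma gst_join n a b c : gst n a -> gst n b -> fixf n c = stjoin (fixf n a) (fixf n b) -> gst n c.
Proof. rewrite /gst => H1 H2 ->; apply stjoin_lub; auto. Qed.

Lemma rjoin_hole S k R' : gres S (Res k VHole) -> gres S R' ->
  rjoin (fixres S (Res k VHole)) (fixres S R') = fixres S R'.
Proof. destruct S as [kS vS], R' as [k' v']; simpl. intros [-> _] [-> _]. by rewrite fixv_hole. Qed.

Lemma env_asm s x v A A' A'' B B' B'' :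
  envle (fixf s A) s -> envle (fixf s A') s -> envle (fixf s A'') s ->
  envle (fixf (upd s x v) B) (upd s x v) -> envle (fixf (upd s x v) B') (upd s x v) ->
  envle (fixf (upd s x v) B'') (upd s x v) ->
  fixf s A'' = envjoin (fixf s A) (fixf s A') ->
  fixf (upd s x v) B'' = envjoin (fixf (upd s x v) B) (fixf (upd s x v) B') ->
  fixf s (envjoin A'' (upd B'' x VHole)) =
  envjoin (fixf s (envjoin A (upd B x VHole))) (fixf s (envjoin A' (upd B' x VHole))).
Proof.
  intros a a' a'' b b' b'' EA EB.
  have u := envle_fix_upd_hole b. have u' := envle_fix_upd_hole b'. have u'' := envle_fix_upd_hole b''.
  rewrite !fixf_hom //. rewrite !(fixf_upd_hole _ _ _ v) EA EB.
  rewrite !(fixf_upd_hole _ _ _ v) in u u'.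
  change (envjoin (envjoin (fixf s A) (fixf s A'))
     (upd (fun y => vjoin (fixf (upd s x v) B y) (fixf (upd s x v) B' y)) x VHole) =
   envjoin (envjoin (fixf s A) (upd (fixf (upd s x v) B) x VHole))
     (envjoin (fixf s A') (upd (fixf (upd s x v) B') x VHole))).
  rewrite upd_hole_join. apply (envjoin_inter _ _ _ _ s); auto.
Qed.

Lemma env_asm2 s x v A A' A'' B B' B'' :
  envle (fixf s A) s -> envle (fixf s A') s -> envle (fixf s A'') s ->
  envle (fixf (upd s x v) B) (upd s x v) -> envle (fixf (upd s x v) B') (upd s x v) ->
  envle (fixf (upd s x v) B'') (upd s x v) ->
  fixf s A'' = envjoin (fixf s A) (fixf s A') ->
  fixf (upd s x v) B'' = envjoin (fixf (upd s x v) B) (fixf (upd s x v) B') ->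
  fixf s (envjoin (upd B'' x VHole) A'') =
  envjoin (fixf s (envjoin (upd B x VHole) A)) (fixf s (envjoin (upd B' x VHole) A')).
Proof.
  intros a a' a'' b b' b'' EA EB.
  have u := envle_fix_upd_hole b. have u' := envle_fix_upd_hole b'. have u'' := envle_fix_upd_hole b''.
  rewrite !fixf_hom //. rewrite !(fixf_upd_hole _ _ _ v) EA EB.
  rewrite !(fixf_upd_hole _ _ _ v) in u u'.
  change (envjoin 
     (upd (fun y => vjoin (fixf (upd s x v) B y) (fixf (upd s x v) B' y)) x VHole) (envjoin (fixf s A) (fixf s A')) =
   envjoin (envjoin (upd (fixf (upd s x v) B) x VHole) (fixf s A))
     (envjoin (upd (fixf (upd s x v) B') x VHole) (fixf s A'))).
  rewrite upd_hole_join. apply (envjoin_inter _ _ _ _ s); auto.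
Qed.

Lemma env_asm_m s x v A' A'' B' B'' :
  envle (fixf s A') s -> envle (fixf s A'') s ->
  envle (fixf (upd s x v) B') (upd s x v) -> envle (fixf (upd s x v) B'') (upd s x v) ->
  fixf s A'' = fixf s A' -> fixf (upd s x v) B'' = fixf (upd s x v) B' ->
  fixf s (envjoin A'' (upd B'' x VHole)) = fixf s (envjoin A' (upd B' x VHole)) /\
  fixf s (envjoin (upd B'' x VHole) A'') = fixf s (envjoin (upd B' x VHole) A').
Proof.
  intros a' a'' b' b'' EA EB.
  have u' := envle_fix_upd_hole b'. have u'' := envle_fix_upd_hole b''.
  rewrite !fixf_hom //. rewrite !(fixf_upd_hole _ _ _ v) EA EB. auto.
Qed.

Lemma fixres_val k1 k v w : fixres (Res k1 v) (Res k w) = Res k (fixv v w).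
Proof. reflexivity. Qed.

Lemma case_letS s m x M1 M2 T1 T2 m' v m'' R :
  ceval T1 s m M1 m' (Res Val v) -> ceval T2 (upd s x v) m' M2 m'' R ->
  Pm T1 s m M1 m' (Res Val v) -> Pm T2 (upd s x v) m' M2 m'' R ->
  Hstruct (TLetS T1 x T2) s m (CLet x M1 M2) m'' R /\ Hmixed (TLetS T1 x T2) s m (CLet x M1 M2) m'' R.
Proof.
  intros Hc1 Hc2 IH1 IH2; split.
  - intros mu R0 mu' R' mu0 R'' r mm N U r' m1 N' U' r'' m2 N'' U''
           Hmu HR Hmu' HR' Hm Hr B1 B2 B3 Hs Hs' Hs''.
    have Hmu0 := gst_join Hmu Hmu' Hm. have HR'' := @gres_join _ _ _ _ HR HR' Hr.
    inv3 Hs Hs' Hs''.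
    pose proof H9 as Ha; pose proof H10 as Hb; pose proof H12 as Ha'; pose proof H13 as Hb'; pose proof H15 as Ha''; pose proof H16 as Hb''.
      destruct (IH2 _ _ _ _ _ _ _ _ _ _ _ _ _ _ _ _ _ _ Hmu HR Hmu' HR' Hm Hr Ha Ha' Ha'') as (E1 & E2 & E3 & E4).
      destruct (slice_sound Hc2 Hmu HR Ha) as (Sr & Sm & SN).
      destruct (slice_sound Hc2 Hmu' HR' Ha') as (Sr' & Sm' & SN').
      destruct (slice_sound Hc2 Hmu0 HR'' Ha'') as (Sr'' & Sm'' & SN'').
      have G : gres (Res Val v) (Res Val (r'0 x)) := conj erefl (fix_at_le Sr).
      have G' : gres (Res Val v) (Res Val (r'1 x)) := conj erefl (fix_at_le Sr').
      have G'' : gres (Res Val v) (Res Val (r' x)) := conj erefl (fix_at_le Sr'').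
      have Er : fixres (Res Val v) (Res Val (r' x)) = rjoin (fixres (Res Val v) (Res Val (r'0 x))) (fixres (Res Val v) (Res Val (r'1 x)))
        by rewrite !fixres_val -!(fixf_upd_at s _ x v) E1.
      destruct (IH1 _ _ _ _ _ _ _ _ _ _ _ _ _ _ _ _ _ _ Sm G Sm' G' E2 Er Hb Hb' Hb'') as (F1 & F2 & F3 & F4).
      destruct (slice_sound Hc1 Sm G Hb) as (Tr & _ & _).
      destruct (slice_sound Hc1 Sm' G' Hb') as (Tr' & _ & _).
      destruct (slice_sound Hc1 Sm'' G'' Hb'') as (Tr'' & _ & _).
      unfold concl; simpl.
      split; [apply env_asm with (v := v); auto|].
      split; [exact F2|].
      split; [rewrite F3 E3; reflexivity | rewrite F4 E4; reflexivity].
  - intros mu k mu' R' mu0 R'' r' m1 N' U' r'' m2 N'' U''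
           Hmu E HR Hmu' HR' Hm Hr B2 B3 Hs' Hs''.
    have Hr' : fixres R R'' = rjoin (fixres R (Res k VHole)) (fixres R R') by rewrite Hr rjoin_hole.
    have Hmu0 := gst_join Hmu Hmu' Hm. have HR'' := @gres_join _ _ _ _ HR HR' Hr'.
    have E2 : erase mu (writes T2) = mu by eapply erase_sub; [exact E|]; rewrite /=; apply fsubsetUr.
    have E1 : erase mu (writes T1) = mu by eapply erase_sub; [exact E|]; rewrite /=; apply fsubsetUl.
    have Hh2 := @cs_hole mu k T2 E2.
    have Hh1 := @cs_hole mu Val T1 E1.
    inv2 Hs' Hs''.
    destruct (IH2 _ _ _ _ _ _ _ _ _ _ _ _ _ _ _ _ _ _ Hmu HR Hmu' HR' Hm Hr' Hh2 H9 H12) as (E1' & E2' & E3' & E4').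
    rewrite fixf_hole envjoin_h_l in E1'. rewrite fixc_hole cjoin_h_l in E3'. rewrite fixt_hole tjoin_h_l in E4'.
    destruct (slice_sound Hc2 Hmu' HR' H9) as (Sr' & Sm' & _).
    destruct (slice_sound Hc2 Hmu0 HR'' H12) as (Sr'' & Sm'' & _).
    have Hmu1 : gst m' mu := gst_frame Hc2 E2 Hmu.
    have G0 : gres (Res Val v) (Res Val VHole) by simpl; rewrite fixv_hole; split; [reflexivity|constructor].
    have G' : gres (Res Val v) (Res Val (r'0 x)) := conj erefl (fix_at_le Sr').
    have G'' : gres (Res Val v) (Res Val (r' x)) := conj erefl (fix_at_le Sr'').
    have Er : fixres (Res Val v) (Res Val (r' x)) = rjoin (fixres (Res Val v) (Res Val VHole)) (fixres (Res Val v) (Res Val (r'0 x))).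
    { rewrite !fixres_val fixv_hole /=. f_equal. rewrite -!(fixf_upd_at s _ x v) E1'. reflexivity. }
    destruct (IH1 _ _ _ _ _ _ _ _ _ _ _ _ _ _ _ _ _ _ Hmu1 G0 Sm' G' E2' Er Hh1 H10 H13) as (F1 & F2 & F3 & F4).
    rewrite fixf_hole envjoin_h_l in F1. rewrite fixc_hole cjoin_h_l in F3. rewrite fixt_hole tjoin_h_l in F4.
    destruct (slice_sound Hc1 Sm' G' H10) as (Tr' & _ & _).
    destruct (slice_sound Hc1 Sm'' G'' H13) as (Tr'' & _ & _).
    split; [exact (proj1 (env_asm_m (v:=v) Tr' Tr'' Sr' Sr'' F1 E1'))|].
    split; [exact F2|]. simpl. rewrite F3 E3' F4 E4'. auto.
Qed.

Lemma case_tryF s m x M1 M2 T1 T2 m' v m'' R :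
  ceval T1 s m M1 m' (Res Exn v) -> ceval T2 (upd s x v) m' M2 m'' R ->
  Pm T1 s m M1 m' (Res Exn v) -> Pm T2 (upd s x v) m' M2 m'' R ->
  Hstruct (TTryF T1 x T2) s m (CTry M1 x M2) m'' R /\ Hmixed (TTryF T1 x T2) s m (CTry M1 x M2) m'' R.
Proof.
  intros Hc1 Hc2 IH1 IH2; split.
  - intros mu R0 mu' R' mu0 R'' r mm N U r' m1 N' U' r'' m2 N'' U''
           Hmu HR Hmu' HR' Hm Hr B1 B2 B3 Hs Hs' Hs''.
    have Hmu0 := gst_join Hmu Hmu' Hm. have HR'' := @gres_join _ _ _ _ HR HR' Hr.
    inv3 Hs Hs' Hs''.
    pose proof H9 as Ha; pose proof H10 as Hb; pose proof H12 as Ha'; pose proof H13 as Hb'; pose proof H15 as Ha''; pose proof H16 as Hb''.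
      destruct (IH2 _ _ _ _ _ _ _ _ _ _ _ _ _ _ _ _ _ _ Hmu HR Hmu' HR' Hm Hr Ha Ha' Ha'') as (E1 & E2 & E3 & E4).
      destruct (slice_sound Hc2 Hmu HR Ha) as (Sr & Sm & SN).
      destruct (slice_sound Hc2 Hmu' HR' Ha') as (Sr' & Sm' & SN').
      destruct (slice_sound Hc2 Hmu0 HR'' Ha'') as (Sr'' & Sm'' & SN'').
      have G : gres (Res Exn v) (Res Exn (r'0 x)) := conj erefl (fix_at_le Sr).
      have G' : gres (Res Exn v) (Res Exn (r'1 x)) := conj erefl (fix_at_le Sr').
      have G'' : gres (Res Exn v) (Res Exn (r' x)) := conj erefl (fix_at_le Sr'').
      have Er : fixres (Res Exn v) (Res Exn (r' x)) = rjoin (fixres (Res Exn v) (Res Exn (r'0 x))) (fixres (Res Exn v) (Res Exn (r'1 x)))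
        by rewrite !fixres_val -!(fixf_upd_at s _ x v) E1.
      destruct (IH1 _ _ _ _ _ _ _ _ _ _ _ _ _ _ _ _ _ _ Sm G Sm' G' E2 Er Hb Hb' Hb'') as (F1 & F2 & F3 & F4).
      destruct (slice_sound Hc1 Sm G Hb) as (Tr & _ & _).
      destruct (slice_sound Hc1 Sm' G' Hb') as (Tr' & _ & _).
      destruct (slice_sound Hc1 Sm'' G'' Hb'') as (Tr'' & _ & _).
      unfold concl; simpl.
      split; [apply env_asm2 with (v := v); auto|].
      split; [exact F2|].
      split; [rewrite F3 E3; reflexivity | rewrite F4 E4; reflexivity].
  - intros mu k mu' R' mu0 R'' r' m1 N' U' r'' m2 N'' U''
           Hmu E HR Hmu' HR' Hm Hr B2 B3 Hs' Hs''.
    have Hr' : fixres R R'' = rjoin (fixres R (Res k VHole)) (fixres R R') by rewrite Hr rjoin_hole.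
    have Hmu0 := gst_join Hmu Hmu' Hm. have HR'' := @gres_join _ _ _ _ HR HR' Hr'.
    have E2 : erase mu (writes T2) = mu by eapply erase_sub; [exact E|]; rewrite /=; apply fsubsetUr.
    have E1 : erase mu (writes T1) = mu by eapply erase_sub; [exact E|]; rewrite /=; apply fsubsetUl.
    have Hh2 := @cs_hole mu k T2 E2.
    have Hh1 := @cs_hole mu Exn T1 E1.
    inv2 Hs' Hs''.
    destruct (IH2 _ _ _ _ _ _ _ _ _ _ _ _ _ _ _ _ _ _ Hmu HR Hmu' HR' Hm Hr' Hh2 H9 H12) as (E1' & E2' & E3' & E4').
    rewrite fixf_hole envjoin_h_l in E1'. rewrite fixc_hole cjoin_h_l in E3'. rewrite fixt_hole tjoin_h_l in E4'.
    destruct (slice_sound Hc2 Hmu' HR' H9) as (Sr' & Sm' & _).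
    destruct (slice_sound Hc2 Hmu0 HR'' H12) as (Sr'' & Sm'' & _).
    have Hmu1 : gst m' mu := gst_frame Hc2 E2 Hmu.
    have G0 : gres (Res Exn v) (Res Exn VHole) by simpl; rewrite fixv_hole; split; [reflexivity|constructor].
    have G' : gres (Res Exn v) (Res Exn (r'0 x)) := conj erefl (fix_at_le Sr').
    have G'' : gres (Res Exn v) (Res Exn (r' x)) := conj erefl (fix_at_le Sr'').
    have Er : fixres (Res Exn v) (Res Exn (r' x)) = rjoin (fixres (Res Exn v) (Res Exn VHole)) (fixres (Res Exn v) (Res Exn (r'0 x))).
    { rewrite !fixres_val fixv_hole /=. f_equal. rewrite -!(fixf_upd_at s _ x v) E1'. reflexivity. }
    destruct (IH1 _ _ _ _ _ _ _ _ _ _ _ _ _ _ _ _ _ _ Hmu1 G0 Sm' G' E2' Er Hh1 H10 H13) as (F1 & F2 & F3 & F4).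
    rewrite fixf_hole envjoin_h_l in F1. rewrite fixc_hole cjoin_h_l in F3. rewrite fixt_hole tjoin_h_l in F4.
    destruct (slice_sound Hc1 Sm' G' H10) as (Tr' & _ & _).
    destruct (slice_sound Hc1 Sm'' G'' H13) as (Tr'' & _ & _).
    split; [exact (proj2 (env_asm_m (v:=v) Tr' Tr'' Sr' Sr'' F1 E1'))|].
    split; [exact F2|]. simpl. rewrite F3 E3' F4 E4'. auto.
Qed.

Lemma case_letF s m x M1 M2 T m' v : ceval T s m M1 m' (Res Exn v) -> Pm T s m M1 m' (Res Exn v) ->
  Hstruct (TLetF T) s m (CLet x M1 M2) m' (Res Exn v) /\ Hmixed (TLetF T) s m (CLet x M1 M2) m' (Res Exn v).
Proof.
  intros Hc IH; split.
  - intros mu R0 mu' R' mu0 R'' r mm N U r' m1 N' U' r'' m2 N'' U''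
           Hmu HR Hmu' HR' Hm Hr B1 B2 B3 Hs Hs' Hs''.
    inv3 Hs Hs' Hs''.
    match goal with Ha : cslice mu _ T _ _ _ _, Ha' : cslice mu' _ T _ _ _ _, Ha'' : cslice mu0 _ T _ _ _ _ |- _ =>
      destruct (IH _ _ _ _ _ _ _ _ _ _ _ _ _ _ _ _ _ _ Hmu HR Hmu' HR' Hm Hr Ha Ha' Ha'') as (E1 & E2 & E3 & E4) end.
    unfold concl; simpl. rewrite !fixc_hole E3 E4. auto.
  - intros mu k mu' R' mu0 R'' r' m1 N' U' r'' m2 N'' U''
           Hmu E HR Hmu' HR' Hm Hr B2 B3 Hs' Hs''.
    have Hr' : fixres (Res Exn v) R'' = rjoin (fixres (Res Exn v) (Res k VHole)) (fixres (Res Exn v) R') by rewrite Hr rjoin_hole.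
    have Hh := @cs_hole mu k T E.
    inv2 Hs' Hs''.
    match goal with Ha' : cslice mu' _ T _ _ _ _, Ha'' : cslice mu0 _ T _ _ _ _ |- _ =>
      destruct (IH _ _ _ _ _ _ _ _ _ _ _ _ _ _ _ _ _ _ Hmu HR Hmu' HR' Hm Hr' Hh Ha' Ha'') as (E1 & E2 & E3 & E4) end.
    rewrite fixf_hole envjoin_h_l in E1. rewrite fixc_hole cjoin_h_l in E3. rewrite fixt_hole tjoin_h_l in E4.
    simpl. rewrite !fixc_hole E3 E4. auto.
Qed.

Lemma case_tryS s m x M1 M2 T m' v : ceval T s m M1 m' (Res Val v) -> Pm T s m M1 m' (Res Val v) ->
  Hstruct (TTryS T) s m (CTry M1 x M2) m' (Res Val v) /\ Hmixed (TTryS T) s m (CTry M1 x M2) m' (Res Val v).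
Proof.
  intros Hc IH; split.
  - intros mu R0 mu' R' mu0 R'' r mm N U r' m1 N' U' r'' m2 N'' U''
           Hmu HR Hmu' HR' Hm Hr B1 B2 B3 Hs Hs' Hs''.
    inv3 Hs Hs' Hs''.
    match goal with Ha : cslice mu _ T _ _ _ _, Ha' : cslice mu' _ T _ _ _ _, Ha'' : cslice mu0 _ T _ _ _ _ |- _ =>
      destruct (IH _ _ _ _ _ _ _ _ _ _ _ _ _ _ _ _ _ _ Hmu HR Hmu' HR' Hm Hr Ha Ha' Ha'') as (E1 & E2 & E3 & E4) end.
    unfold concl; simpl. rewrite !fixc_hole E3 E4. auto.
  - intros mu k mu' R' mu0 R'' r' m1 N' U' r'' m2 N'' U''
           Hmu E HR Hmu' HR' Hm Hr B2 B3 Hs' Hs''.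
    have Hr' : fixres (Res Val v) R'' = rjoin (fixres (Res Val v) (Res k VHole)) (fixres (Res Val v) R') by rewrite Hr rjoin_hole.
    have Hh := @cs_hole mu k T E.
    inv2 Hs' Hs''.
    match goal with Ha' : cslice mu' _ T _ _ _ _, Ha'' : cslice mu0 _ T _ _ _ _ |- _ =>
      destruct (IH _ _ _ _ _ _ _ _ _ _ _ _ _ _ _ _ _ _ Hmu HR Hmu' HR' Hm Hr' Hh Ha' Ha'') as (E1 & E2 & E3 & E4) end.
    rewrite fixf_hole envjoin_h_l in E1. rewrite fixc_hole cjoin_h_l in E3. rewrite fixt_hole tjoin_h_l in E4.
    simpl. rewrite !fixc_hole E3 E4. auto.
Qed.

Lemma case_caseL s m e x M1 y M2 v T m' R : eeval s e (VInl v) -> ceval T (upd s x v) m M1 m' R ->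
  Pm T (upd s x v) m M1 m' R ->
  Hstruct (TCaseL e x T y) s m (CCase e x M1 y M2) m' R /\ Hmixed (TCaseL e x T y) s m (CCase e x M1 y M2) m' R.
Proof.
  intros Hev Hc IH; split.
  - intros mu R0 mu' R' mu0 R'' r mm N U r' m1 N' U' r'' m2 N'' U''
           Hmu HR Hmu' HR' Hm Hr B1 B2 B3 Hs Hs' Hs''.
    have Hmu0 := gst_join Hmu Hmu' Hm. have HR'' := @gres_join _ _ _ _ HR HR' Hr.
    inv3 Hs Hs' Hs''.
      destruct (IH _ _ _ _ _ _ _ _ _ _ _ _ _ _ _ _ _ _ Hmu HR Hmu' HR' Hm Hr H10 H13 H16) as (E1 & E2 & E3 & E4).
      destruct (slice_sound Hc Hmu HR H10) as (Sr & _ & _).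
      destruct (slice_sound Hc Hmu' HR' H13) as (Sr' & _ & _).
      destruct (slice_sound Hc Hmu0 HR'' H16) as (Sr'' & _ & _).
      have Hv : fixv (VInl v) (VInl (r' x)) = vjoin (fixv (VInl v) (VInl (r'0 x))) (fixv (VInl v) (VInl (r'1 x)))
        by simpl; f_equal; rewrite -!(fixf_upd_at s _ x v) E1.
      have G := vle_inl (fix_at_le Sr); have G' := vle_inl (fix_at_le Sr'); have G'' := vle_inl (fix_at_le Sr'').
      destruct (eslice_join_fix Hev H11 H14 H17 G G' Hv) as [F1 F2].
      have Ba := esl_b H11 Hev G; have Ba' := esl_b H14 Hev G'; have Ba'' := esl_b H17 Hev G''.
      unfold concl; simpl; rewrite !fixc_hole F2 E3 E4.
      split; [apply env_asm2 with (v := v); auto|]; auto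
.
  - intros mu k mu' R' mu0 R'' r' m1 N' U' r'' m2 N'' U''
           Hmu E HR Hmu' HR' Hm Hr B2 B3 Hs' Hs''.
    have Hr' : fixres R R'' = rjoin (fixres R (Res k VHole)) (fixres R R') by rewrite Hr rjoin_hole.
    have Hmu0 := gst_join Hmu Hmu' Hm. have HR'' := @gres_join _ _ _ _ HR HR' Hr'.
    have Hh := @cs_hole mu k T E.
    inv2 Hs' Hs''.
      destruct (IH _ _ _ _ _ _ _ _ _ _ _ _ _ _ _ _ _ _ Hmu HR Hmu' HR' Hm Hr' Hh H10 H13) as (E1 & E2 & E3 & E4).
      rewrite fixf_hole envjoin_h_l in E1; rewrite fixc_hole cjoin_h_l in E3; rewrite fixt_hole tjoin_h_l in E4.
      destruct (slice_sound Hc Hmu' HR' H10) as (Sr' & _ & _).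
      destruct (slice_sound Hc Hmu0 HR'' H13) as (Sr'' & _ & _).
      have Hv : fixv (VInl v) (VInl (r' x)) = fixv (VInl v) (VInl (r'0 x))
        by simpl; f_equal; rewrite -!(fixf_upd_at s _ x v) E1.
      have G' := vle_inl (fix_at_le Sr'); have G'' := vle_inl (fix_at_le Sr'').
      destruct (eslice_eq_fix Hev H11 H14 G' Hv) as [F1 F2].
      have Ba' := esl_b H11 Hev G'; have Ba'' := esl_b H14 Hev G''.
      simpl; rewrite !fixc_hole F2 E3 E4.
      split; [exact (proj2 (env_asm_m (v:=v) Ba' Ba'' Sr' Sr'' F1 E1))|]; auto
.
Qed.

Lemma case_caseR s m e x M1 y M2 v T m' R : eeval s e (VInr v) -> ceval T (upd s y v) m M2 m' R ->
  Pm T (upd s y v) m M2 m' R ->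
  Hstruct (TCaseR e x y T) s m (CCase e x M1 y M2) m' R /\ Hmixed (TCaseR e x y T) s m (CCase e x M1 y M2) m' R.
Proof.
  intros Hev Hc IH; split.
  - intros mu R0 mu' R' mu0 R'' r mm N U r' m1 N' U' r'' m2 N'' U''
           Hmu HR Hmu' HR' Hm Hr B1 B2 B3 Hs Hs' Hs''.
    have Hmu0 := gst_join Hmu Hmu' Hm. have HR'' := @gres_join _ _ _ _ HR HR' Hr.
    inv3 Hs Hs' Hs''.
      destruct (IH _ _ _ _ _ _ _ _ _ _ _ _ _ _ _ _ _ _ Hmu HR Hmu' HR' Hm Hr H10 H13 H16) as (E1 & E2 & E3 & E4).
      destruct (slice_sound Hc Hmu HR H10) as (Sr & _ & _).
      destruct (slice_sound Hc Hmu' HR' H13) as (Sr' & _ & _).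
      destruct (slice_sound Hc Hmu0 HR'' H16) as (Sr'' & _ & _).
      have Hv : fixv (VInr v) (VInr (r' y)) = vjoin (fixv (VInr v) (VInr (r'0 y))) (fixv (VInr v) (VInr (r'1 y)))
        by simpl; f_equal; rewrite -!(fixf_upd_at s _ y v) E1.
      have G := vle_inr (fix_at_le Sr); have G' := vle_inr (fix_at_le Sr'); have G'' := vle_inr (fix_at_le Sr'').
      destruct (eslice_join_fix Hev H11 H14 H17 G G' Hv) as [F1 F2].
      have Ba := esl_b H11 Hev G; have Ba' := esl_b H14 Hev G'; have Ba'' := esl_b H17 Hev G''.
      unfold concl; simpl; rewrite !fixc_hole F2 E3 E4.
      split; [apply env_asm2 with (v := v); auto|]; auto
.
  - intros mu k mu' R' mu0 R'' r' m1 N' U' r'' m2 N'' U''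
           Hmu E HR Hmu' HR' Hm Hr B2 B3 Hs' Hs''.
    have Hr' : fixres R R'' = rjoin (fixres R (Res k VHole)) (fixres R R') by rewrite Hr rjoin_hole.
    have Hmu0 := gst_join Hmu Hmu' Hm. have HR'' := @gres_join _ _ _ _ HR HR' Hr'.
    have Hh := @cs_hole mu k T E.
    inv2 Hs' Hs''.
      destruct (IH _ _ _ _ _ _ _ _ _ _ _ _ _ _ _ _ _ _ Hmu HR Hmu' HR' Hm Hr' Hh H10 H13) as (E1 & E2 & E3 & E4).
      rewrite fixf_hole envjoin_h_l in E1; rewrite fixc_hole cjoin_h_l in E3; rewrite fixt_hole tjoin_h_l in E4.
      destruct (slice_sound Hc Hmu' HR' H10) as (Sr' & _ & _).
      destruct (slice_sound Hc Hmu0 HR'' H13) as (Sr'' & _ & _).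
      have Hv : fixv (VInr v) (VInr (r' y)) = fixv (VInr v) (VInr (r'0 y))
        by simpl; f_equal; rewrite -!(fixf_upd_at s _ y v) E1.
      have G' := vle_inr (fix_at_le Sr'); have G'' := vle_inr (fix_at_le Sr'').
      destruct (eslice_eq_fix Hev H11 H14 G' Hv) as [F1 F2].
      have Ba' := esl_b H11 Hev G'; have Ba'' := esl_b H14 Hev G''.
      simpl; rewrite !fixc_hole F2 E3 E4.
      split; [exact (proj2 (env_asm_m (v:=v) Ba' Ba'' Sr' Sr'' F1 E1))|]; auto
.
Qed.

Lemma appval_join (r0 : env) f x M v2 A A' P P' :
  envle A (upd (upd r0 f (VClo r0 f x M)) x v2) -> envle A' (upd (upd r0 f (VClo r0 f x M)) x v2) ->
  cle P M -> cle P' M ->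
  appval (envjoin A A') f x (cjoin P P') = vjoin (appval A f x P) (appval A' f x P').
Proof.
  intros HA HA' HP HP'.
  have E1 : upd (envjoin A A') x VHole f = vjoin (upd A x VHole f) (upd A' x VHole f).
  { rewrite /upd /envjoin. by case: (f == x). }
  have E2 : VClo (upd (upd (envjoin A A') x VHole) f VHole) f x (cjoin P P') =
            vjoin (VClo (upd (upd A x VHole) f VHole) f x P) (VClo (upd (upd A' x VHole) f VHole) f x P').
  { simpl. f_equal. apply functional_extensionality => y. rewrite /upd /envjoin.
    case: (y == f) => //. case: (y == x) => //. }
  rewrite /appval E1 E2.
  apply (vjoin_inter _ _ _ _ (VClo r0 f x M)).
  - exact (clo_bound1 HA).
  - exact (clo_bound1 HA').
  - exact (clo_bound2 HA HP).
  - exact (clo_bound2 HA' HP').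
Qed.

Lemma case_app s m e1 e2 r0 f x M v2 T m' R :
  eeval s e1 (VClo r0 f x M) -> eeval s e2 v2 ->
  ceval T (upd (upd r0 f (VClo r0 f x M)) x v2) m M m' R ->
  Pm T (upd (upd r0 f (VClo r0 f x M)) x v2) m M m' R ->
  Hstruct (TApp e1 e2 f x T) s m (CApp e1 e2) m' R /\ Hmixed (TApp e1 e2 f x T) s m (CApp e1 e2) m' R.
Proof.
  intros Hev1 Hev2 Hc IH; split.
  - intros mu R0 mu' R' mu0 R'' r mm N U r' m1 N' U' r'' m2 N'' U''
           Hmu HR Hmu' HR' Hm Hr B1 B2 B3 Hs Hs' Hs''.
    have Hmu0 := gst_join Hmu Hmu' Hm. have HR'' := @gres_join _ _ _ _ HR HR' Hr.
    inv3 Hs Hs' Hs''.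
    destruct (IH _ _ _ _ _ _ _ _ _ _ _ _ _ _ _ _ _ _ Hmu HR Hmu' HR' Hm Hr H11 H15 H19) as (E1 & E2 & E3 & E4).
    destruct (slice_sound Hc Hmu HR H11) as (Sr & _ & SN).
    destruct (slice_sound Hc Hmu' HR' H15) as (Sr' & _ & SN').
    destruct (slice_sound Hc Hmu0 HR'' H19) as (Sr'' & _ & SN'').
    have Hv2 : fixv v2 (r' x) = vjoin (fixv v2 (r'0 x)) (fixv v2 (r'1 x))
      by rewrite -!(fixf_upd_at (upd r0 f (VClo r0 f x M)) _ x v2) E1.
    have G := fix_at_le Sr. have G' := fix_at_le Sr'. have G'' := fix_at_le Sr''.
    destruct (eslice_join_fix Hev2 H12 H16 H20 G G' Hv2) as [F1 F2].
    have Ba := esl_b H12 Hev2 G. have Ba' := esl_b H16 Hev2 G'. have Ba'' := esl_b H20 Hev2 G''.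
    change (eslice (appval r'0 f x M0) e1 r1 e1') in H13.
    change (eslice (appval r'1 f x M1) e1 r4 e1'0) in H17.
    change (eslice (appval r' f x M2) e1 r6 e1'1) in H21.
    have Hw := @fix_appval _ _ _ _ _ _ _ Sr SN.
    have Hw' := @fix_appval _ _ _ _ _ _ _ Sr' SN'.
    have Hw'' := @fix_appval _ _ _ _ _ _ _ Sr'' SN''.
    have K : vle (fixv (VClo r0 f x M) (appval r'0 f x M0)) (VClo r0 f x M) by rewrite Hw; exact (clo_bound Sr SN).
    have K' : vle (fixv (VClo r0 f x M) (appval r'1 f x M1)) (VClo r0 f x M) by rewrite Hw'; exact (clo_bound Sr' SN').
    have K'' : vle (fixv (VClo r0 f x M) (appval r' f x M2)) (VClo r0 f x M) by rewrite Hw''; exact (clo_bound Sr'' SN'').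
    have Hv1 : fixv (VClo r0 f x M) (appval r' f x M2) =
               vjoin (fixv (VClo r0 f x M) (appval r'0 f x M0)) (fixv (VClo r0 f x M) (appval r'1 f x M1)).
    { rewrite Hw Hw' Hw'' E1 E3. apply appval_join with (r0 := r0) (M := M) (v2 := v2); auto. }
    destruct (eslice_join_fix Hev1 H13 H17 H21 K K' Hv1) as [J1 J2].
    have Ca := esl_b H13 Hev1 K. have Ca' := esl_b H17 Hev1 K'. have Ca'' := esl_b H21 Hev1 K''.
    unfold concl; simpl; rewrite J2 F2 E4.
    split; [|split; [exact E2|split; reflexivity]].
    rewrite !fixf_hom //. rewrite J1 F1. apply (envjoin_inter _ _ _ _ s); auto.
  - intros mu k mu' R' mu0 R'' r' m1 N' U' r'' m2 N'' U''
           Hmu E HR Hmu' HR' Hm Hr B2 B3 Hs' Hs''.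
    have Hr' : fixres R R'' = rjoin (fixres R (Res k VHole)) (fixres R R') by rewrite Hr rjoin_hole.
    have Hmu0 := gst_join Hmu Hmu' Hm. have HR'' := @gres_join _ _ _ _ HR HR' Hr'.
    have Hh := @cs_hole mu k T E.
    inv2 Hs' Hs''.
    destruct (IH _ _ _ _ _ _ _ _ _ _ _ _ _ _ _ _ _ _ Hmu HR Hmu' HR' Hm Hr' Hh H11 H15) as (E1 & E2 & E3 & E4).
    rewrite fixf_hole envjoin_h_l in E1. rewrite fixc_hole cjoin_h_l in E3. rewrite fixt_hole tjoin_h_l in E4.
    destruct (slice_sound Hc Hmu' HR' H11) as (Sr' & _ & SN').
    destruct (slice_sound Hc Hmu0 HR'' H15) as (Sr'' & _ & SN'').
    have Hv2 : fixv v2 (r' x) = fixv v2 (r'0 x)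
      by rewrite -!(fixf_upd_at (upd r0 f (VClo r0 f x M)) _ x v2) E1.
    have G' := fix_at_le Sr'. have G'' := fix_at_le Sr''.
    destruct (eslice_eq_fix Hev2 H12 H16 G' Hv2) as [F1 F2].
    have Ba' := esl_b H12 Hev2 G'. have Ba'' := esl_b H16 Hev2 G''.
    change (eslice (appval r'0 f x M0) e1 r1 e1') in H13.
    change (eslice (appval r' f x M1) e1 r4 e1'0) in H17.
    have Hw' := @fix_appval _ _ _ _ _ _ _ Sr' SN'.
    have Hw'' := @fix_appval _ _ _ _ _ _ _ Sr'' SN''.
    have K' : vle (fixv (VClo r0 f x M) (appval r'0 f x M0)) (VClo r0 f x M) by rewrite Hw'; exact (clo_bound Sr' SN').
    have K'' : vle (fixv (VClo r0 f x M) (appval r' f x M1)) (VClo r0 f x M) by rewrite Hw''; exact (clo_bound Sr'' SN'').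
    have Hv1 : fixv (VClo r0 f x M) (appval r' f x M1) = fixv (VClo r0 f x M) (appval r'0 f x M0)
      by rewrite Hw' Hw'' E1 E3.
    destruct (eslice_eq_fix Hev1 H13 H17 K' Hv1) as [J1 J2].
    have Ca' := esl_b H13 Hev1 K'. have Ca'' := esl_b H17 Hev1 K''.
    simpl; rewrite J2 F2 E4.
    split; [|split; [exact E2|split; reflexivity]].
    rewrite !fixf_hom //. rewrite J1 F1. reflexivity.
Qed.

Close Scope fset_scope.
Unset Implicit Arguments.
Set Implicit Arguments.

Lemma main T s n M n' S : ceval T s n M n' S -> Pm T s n M n' S.
Proof.
  intros Hc; induction Hc.
  - have [X Y] := case_ret m H. apply dispatch; [econstructor; eauto|exact X|exact Y].
  - have [X Y] := case_app H H0 Hc IHHc. apply dispatch; [econstructor; eauto|exact X|exact Y].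
  - have [X Y] := case_raise m H. apply dispatch; [econstructor; eauto|exact X|exact Y].
  - have [X Y] := case_ref H H0. apply dispatch; [econstructor; eauto|exact X|exact Y].
  - have [X Y] := case_assign m H H0. apply dispatch; [econstructor; eauto|exact X|exact Y].
  - have [X Y] := case_deref H H0. apply dispatch; [econstructor; eauto|exact X|exact Y].
  - have [X Y] := case_letS Hc1 Hc2 IHHc1 IHHc2. apply dispatch; [econstructor; eauto|exact X|exact Y].
  - have [X Y] := case_letF x M2 Hc IHHc. apply dispatch; [econstructor; eauto|exact X|exact Y].
  - have [X Y] := case_tryF Hc1 Hc2 IHHc1 IHHc2. apply dispatch; [econstructor; eauto|exact X|exact Y].
  - have [X Y] := case_tryS x M2 Hc IHHc. apply dispatch; [econstructor; eauto|exact X|exact Y].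
  - have [X Y] := case_caseL y M2 H Hc IHHc. apply dispatch; [econstructor; eauto|exact X|exact Y].
  - have [X Y] := case_caseR x M1 H Hc IHHc. apply dispatch; [econstructor; eauto|exact X|exact Y].
Qed.

Theorem lemma4p7 (T : itrace) (sigma : env) (nu : store) (M : icomp)
    (nu' : store) (S : result) (mu mu' : store) (R R' : result)
    (b b' b'' : env * store * icomp * itrace) :
  ceval T sigma nu M nu' S ->
  in_prefix_out nu' S (mu, R) ->
  in_prefix_out nu' S (mu', R') ->
  bwd sigma nu M T (mu, R) b ->
  bwd sigma nu M T (mu', R') b' ->
  bwd sigma nu M T (join_out (mu, R) (mu', R')) b'' ->
  b'' = join_in b b'.
Proof.
  intros Hc [Hmu HR] [Hmu' HR'] Hb Hb' Hb''.
  destruct b as [[[r m] N] U], b' as [[[r' m'] N'] U'], b'' as [[[r'' m''] N''] U''].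
  destruct Hb as [(Hr & Hm & HN & HU) Hs].
  destruct Hb' as [(Hr' & Hm' & HN' & HU') Hs'].
  destruct Hb'' as [(Hr'' & Hm'' & HN'' & HU'') Hs''].
  simpl in *.
  destruct S as [kS vS], R as [k v], R' as [k' v']. simpl in HR, HR'.
  destruct HR as [-> HR]; destruct HR' as [-> HR'].
  have Gm : gst nu' mu by rewrite /gst (fixf_id _ _ Hmu).
  have Gm' : gst nu' mu' by rewrite /gst (fixf_id _ _ Hmu').
  have GR : gres (Res kS vS) (Res kS v) by simpl; rewrite (fixv_id _ _ HR); auto.
  have GR' : gres (Res kS vS) (Res kS v') by simpl; rewrite (fixv_id _ _ HR'); auto.
  have Ej : fixf nu' (stjoin mu mu') = stjoin (fixf nu' mu) (fixf nu' mu').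
  { rewrite (fixf_id _ _ Hmu) (fixf_id _ _ Hmu') fixf_id //. exact (stjoin_lub _ _ _ Hmu Hmu'). }
  have Er : fixres (Res kS vS) (rjoin (Res kS v) (Res kS v')) =
            rjoin (fixres (Res kS vS) (Res kS v)) (fixres (Res kS vS) (Res kS v')).
  { simpl. rewrite (fixv_id _ _ HR) (fixv_id _ _ HR') fixv_id //. apply vjoin_lub; auto. }
  destruct (main Hc Gm GR Gm' GR' Ej Er Hs Hs' Hs'') as (E1 & E2 & E3 & E4).
  rewrite (fixf_id _ _ Hr'') (fixf_id _ _ Hr) (fixf_id _ _ Hr') in E1.
  rewrite (fixf_id _ _ Hm'') (fixf_id _ _ Hm) (fixf_id _ _ Hm') in E2.
  rewrite (fixc_id _ _ HN'') (fixc_id _ _ HN) (fixc_id _ _ HN') in E3.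
  rewrite (fixt_id _ _ HU'') (fixt_id _ _ HU) (fixt_id _ _ HU') in E4.
  simpl. rewrite E1 E2 E3 E4. reflexivity.
Qed.
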